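(* Let $I$ be a countable index set with nested finite subsets $I_1\subset I_2\subset\cdots$, $\bigcup_nI_n=I$, and let $\mu:\mathcal{F}[I]\to C(\mathbb{N}^* )$ be the ultrafilter frame measure function. Then for $\mathcal{F},\mathcal{F}_1,\mathcal{F}_2\in\mathcal{F}[I]$: (1) $\mu(\mathcal{F}_1)=\mu(\mathcal{F}_2)$ if and only if $\mathcal{F}_1\approx\mathcal{F}_2$; (2) $\mu(\mathcal{F}_1)(p)\le\mu(\mathcal{F}_2)(p)$ for all $p\in\mathbb{N}^*$ if and only if $\mathcal{F}_1\leqq\mathcal{F}_2$; (3) if $\mathcal{F}$ is a Riesz basis for its closed span then $\mu(\mathcal{F})$ is the constant function $1$; (4) if $\mathcal{F}_1,\mathcal{F}_2$ are orthogonal in the sense of supersets then $\mu(\mathcal{F}_1\oplus\mathcal{F}_2)=\mu(\mathcal{F}_1)+\mu(\mathcal{F}_2)$.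
   Context: $\mathcal{F}[I]$: all families $\{f_i\}_{i\in I}$ in a separable Hilbert space that are frames for their closed span; $\tilde f_i=S^{-1}f_i$ is the canonical dual ($S$ the frame operator on the span). $b_n(\mathcal{F})=\sum_{i\in I_n}\langle f_i,\tilde f_i\rangle$, $a_n(\mathcal{F})=b_n(\mathcal{F})/|I_n|$. For sequences, $\mathbf{x}\approx\mathbf{y}$ iff $\lim_n(x_n-y_n)/|I_n|=0$, and for nonnegative sequences $\mathbf{y}\leqq\mathbf{x}$ iff $\liminf_n(x_n-y_n)/|I_n|\ge0$; $\mathcal{F}\approx\mathcal{G}$ (resp. $\mathcal{F}\leqq\mathcal{G}$) means $b(\mathcal{F})\approx b(\mathcal{G})$ (resp. $b(\mathcal{F})\leqq b(\mathcal{G})$). $\mathbb{N}^*$ is the set of free ultrafilters on $\mathbb{N}$ (ultrafilters containing no finite set) with its standard (Stone–Čech remainder) compact Hausdorff topology; for a bounded sequence $\mathbf{x}$ and $p\in\mathbb{N}^*$, $p\text{-}\lim\mathbf{x}$ is the unique $c$ such that for every $\varepsilon>0$, $\{n:|x_n-c|<\varepsilon\}\in p$. The ultrafilter frame measure function is $\mu(\mathcal{F})(p)=p\text{-}\lim_n a_n(\mathcal{F})$. For $\mathcal{F}_1=\{f^1_i\}$, $\mathcal{F}_2=\{f^2_i\}$ with closed spans $H_1,H_2$, $\mathcal{F}_1\oplus\mathcal{F}_2=\{f^1_i\oplus f^2_i\}_{i\in I}\subset H_1\oplus H_2$; they are orthogonal in the sense of supersets if the ranges in $\ell^2(I)$ of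 the analysis operators $h\mapsto(\langle h,f^k_i\rangle)_{i\in I}$, $k=1,2$, are orthogonal, i.e. $\sum_i\langle g,f^1_i\rangle\langle f^2_i,h\rangle=0$ for all $g\in H_1,h\in H_2$. *)

(* Defs.v *)
From HB Require Import structures.
From mathcomp Require Import all_boot all_order all_algebra finmap.
From mathcomp Require Import all_classical all_reals all_analysis.
From mathcomp Require Import complex.

Set Implicit Arguments.
Unset Strict Implicit.
Unset Printing Implicit Defensive.

Import Order.TTheory GRing.Theory Num.Theory.
Import numFieldNormedType.Exports.
Local Open Scope classical_set_scope.
Local Open Scope ring_scope.

Section HilbertFrames.

Variable R : realType.
Local Notation C := R[i].

Definition cmod (z : C) : R := complex.Re `|z|.

Section InnerProduct.
Variable H : lmodType C.
Variable ip : H -> H -> C.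

Definition ipnorm (h : H) : R := Num.sqrt (complex.Re (ip h h)).

Definition is_inner_product : Prop :=
  [/\ forall (a : C) (x y z : H), ip (a *: x + y) z = a * ip x z + ip y z,
      forall x y : H, ip x y = conjc (ip y x),
      forall x : H, 0 <= ip x x
    & forall x : H, ip x x = 0 -> x = 0].

Definition ip_cvg (u : nat -> H) (l : H) : Prop :=
  forall e : R, 0 < e -> exists N : nat, forall n, (N <= n)%N -> ipnorm (u n - l) < e.

Definition ip_cauchy (u : nat -> H) : Prop :=
  forall e : R, 0 < e -> exists N : nat,
    forall m n, (N <= m)%N -> (N <= n)%N -> ipnorm (u m - u n) < e.

Definition ip_complete : Prop :=
  forall u : nat -> H, ip_cauchy u -> exists l, ip_cvg u l.

Definition ip_closure (A : set H) : set H :=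
  [set h | forall e : R, 0 < e -> exists g, A g /\ ipnorm (h - g) < e].

Definition ip_separable : Prop :=
  exists D : set H, countable D /\ ip_closure D = setT.

Definition separable_hilbert : Prop :=
  [/\ is_inner_product, ip_complete & ip_separable].

Variable I : countType.

(* unconditional sums over I (net of finite subsets of I) *)
Definition has_usum (x : I -> H) (l : H) : Prop :=
  forall e : R, 0 < e -> exists J0 : {fset I}, forall J : {fset I},
    (J0 `<=` J)%fset -> ipnorm ((\sum_(i <- J) x i) - l) < e.

Definition has_usumC (x : I -> C) (l : C) : Prop :=
  forall e : R, 0 < e -> exists J0 : {fset I}, forall J : {fset I},
    (J0 `<=` J)%fset -> cmod ((\sum_(i <- J) x i) - l) < e.

Variable f : I -> H.

Definition lin_span : set H :=
  [set h | exists (J : {fset I}) (c : I -> C), h = \sum_(i <- J) c i *: f i].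

Definition closed_span : set H := ip_closure lin_span.

Definition is_frame : Prop :=
  exists A B : R, [/\ 0 < A, 0 < B &
    forall h, closed_span h ->
      ((A * ipnorm h ^+ 2)%:E <= \esum_(i in [set: I]) (cmod (ip h (f i)) ^+ 2)%:E)%E
   /\ (\esum_(i in [set: I]) (cmod (ip h (f i)) ^+ 2)%:E <= (B * ipnorm h ^+ 2)%:E)%E].

Definition is_riesz_basis_of_span : Prop :=
  exists A B : R, [/\ 0 < A, 0 < B &
    forall (J : {fset I}) (c : I -> C),
      A * (\sum_(i <- J) cmod (c i) ^+ 2)
        <= ipnorm (\sum_(i <- J) c i *: f i) ^+ 2
      <= B * (\sum_(i <- J) cmod (c i) ^+ 2)].

Definition frame_op (h : H) : H :=
  xget 0 [set g | has_usum (fun i => ip h (f i) *: f i) g].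

(* canonical dual: tilde f_i = S^{-1} f_i, S restricted to the closed lin_span *)
Definition canonical_dual (i : I) : H :=
  xget 0 [set g | closed_span g /\ frame_op g = f i].

End InnerProduct.

Variable I : countType.
Variable In : nat -> {fset I}.

(* b_n(F) = sum_{i in I_n} <f_i, tilde f_i>  (a real number; the real
   part is taken only to land in R, the value is real anyway) *)
Definition frame_bseq (H : lmodType C) (ip : H -> H -> C) (f : I -> H) : nat -> R :=
  fun n => complex.Re (\sum_(i <- In n) ip (f i) (canonical_dual ip f i)).

Definition frame_aseq (H : lmodType C) (ip : H -> H -> C) (f : I -> H) : nat -> R :=
  fun n => frame_bseq ip f n / (#|` In n |)%:R.

Definition seq_approx (x y : nat -> R) : Prop :=
  (fun n => (x n - y n) / (#|` In n |)%:R) @ \oo --> (0 : R).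

Definition seq_leqq (y x : nat -> R) : Prop :=
  (0 <= limn_einf (fun n => ((x n - y n) / (#|` In n |)%:R)%:E))%E.

End HilbertFrames.

Definition free_ultrafilter (p : set_system nat) : Prop :=
  [/\ p setT /\ ~ p set0,
      (forall A B, p A -> p B -> p (setI A B)),
      (forall A B, A `<=` B -> p A -> p B),
      (forall A, p A \/ p (~` A))
    & forall A, finite_set A -> ~ p A].

Definition Nstar := {p : set_system nat | free_ultrafilter p}.

Definition plim (R : realType) (p : set_system nat) (x : nat -> R) : R :=
  xget 0 [set c | forall e : R, 0 < e -> p [set n | `|x n - c| < e]].

Definition frame_measure (R : realType) (I : countType) (In : nat -> {fset I})
  (H : lmodType R[i]) (ip : H -> H -> R[i]) (f : I -> H) : Nstar -> R :=
  fun p => plim (proj1_sig p) (frame_aseq In ip f).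

Definition ip_dsum (R : realType) (H1 H2 : lmodType R[i])
  (ip1 : H1 -> H1 -> R[i]) (ip2 : H2 -> H2 -> R[i]) :
  (H1 * H2)%type -> (H1 * H2)%type -> R[i] :=
  fun x y => ip1 x.1 y.1 + ip2 x.2 y.2.

Definition ortho_supersets (R : realType) (I : countType) (H1 H2 : lmodType R[i])
  (ip1 : H1 -> H1 -> R[i]) (ip2 : H2 -> H2 -> R[i]) (f1 : I -> H1) (f2 : I -> H2) : Prop :=
  forall g h, closed_span ip1 f1 g -> closed_span ip2 f2 h ->
    has_usumC (fun i => ip1 g (f1 i) * ip2 (f2 i) h) 0.

(* Main.v *)
Require Import Defs.
From HB Require Import structures.
From mathcomp Require Import all_boot all_order all_algebra finmap.
From mathcomp Require Import all_classical all_reals all_analysis.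
From mathcomp Require Import complex.
From mathcomp Require Import ring lra.
Import Order.TTheory GRing.Theory Num.Theory.
Import numFieldNormedType.Exports.
Local Open Scope classical_set_scope.
Local Open Scope ring_scope.
Set Implicit Arguments. Unset Strict Implicit. Unset Printing Implicit Defensive.

Notation cRe := complex.Re.
Notation cIm := complex.Im.

Local Open Scope complex_scope.

Section CmodFacts.
Variable R : realType.
Implicit Types (z w : R[i]) (k : R).

Lemma cmodE z : cmod z = Num.sqrt (cRe z ^+ 2 + cIm z ^+ 2).
Proof. by case: z. Qed.

Lemma cmod_ge0 z : 0 <= cmod z.
Proof. by rewrite cmodE sqrtr_ge0. Qed.

Lemma cmodC z : (cmod z)%:C = `|z|.
Proof. by rewrite normc_def cmodE. Qed.

Lemma cmod2 z : cmod z ^+ 2 = cRe z ^+ 2 + cIm z ^+ 2.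
Proof. by rewrite cmodE sqr_sqrtr // addr_ge0 // sqr_ge0. Qed.

Lemma cmodJ2 z : z * conjc z = (cmod z ^+ 2)%:C.
Proof. by rewrite cmod2; case: z => a b; simpc; rewrite /= -!expr2; congr Complex; ring. Qed.

Lemma cmodM z w : cmod (z * w) = cmod z * cmod w.
Proof.
apply: (@complexI R); rewrite rmorphM /= !cmodC; exact: normrM.
Qed.

Lemma cmodD z w : cmod (z + w) <= cmod z + cmod w.
Proof. by rewrite -lecR rmorphD /= !cmodC; exact: ler_normD. Qed.

Lemma cmodN z : cmod (- z) = cmod z.
Proof. by apply: (@complexI R); rewrite !cmodC normrN. Qed.

Lemma cmodB z w : cmod (z - w) = cmod (w - z).
Proof. by rewrite -cmodN opprB. Qed.

Lemma cmodJ z : cmod (conjc z) = cmod z.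
Proof. by rewrite !cmodE; case: z => a b /=; rewrite sqrrN. Qed.

Lemma cmodR k : cmod k%:C = `|k|.
Proof. by rewrite cmodE /= expr0n /= addr0 sqrtr_sqr. Qed.

Lemma cmod0 : cmod (0 : R[i]) = 0.
Proof. by rewrite (cmodR 0) normr0. Qed.

Lemma cmod_eq0 z : cmod z = 0 -> z = 0.
Proof. move=> h; apply/eqP; rewrite -normr_eq0 -cmodC h //. Qed.

Lemma Re_le_cmod z : cRe z <= cmod z.
Proof.
rewrite cmodE; apply: (le_trans (ler_norm _)); rewrite -sqrtr_sqr.
by apply: ler_wsqrtr; rewrite lerDl sqr_ge0.
Qed.

Lemma absRe_le_cmod z : `|cRe z| <= cmod z.
Proof.
rewrite cmodE -sqrtr_sqr.
by apply: ler_wsqrtr; rewrite lerDl sqr_ge0.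
Qed.

Lemma absIm_le_cmod z : `|cIm z| <= cmod z.
Proof.
rewrite cmodE -sqrtr_sqr.
by apply: ler_wsqrtr; rewrite lerDr sqr_ge0.
Qed.

Lemma Re_conj z : cRe (conjc z) = cRe z.
Proof. by case: z. Qed.

Lemma Im_conj z : cIm (conjc z) = - cIm z.
Proof. by case: z. Qed.

Lemma ReD z w : cRe (z + w) = cRe z + cRe w.
Proof. by case: z; case: w. Qed.

Lemma ImD z w : cIm (z + w) = cIm z + cIm w.
Proof. by case: z; case: w. Qed.

Lemma ReN z : cRe (- z) = - cRe z.
Proof. by case: z. Qed.

Lemma ReB z w : cRe (z - w) = cRe z - cRe w.
Proof. by rewrite ReD ReN. Qed.

Lemma ImB z w : cIm (z - w) = cIm z - cIm w.
Proof. by case: z; case: w. Qed.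

Lemma ReRM k z : cRe (k%:C * z) = k * cRe z.
Proof. by case: z => a b /=; rewrite mul0r subr0. Qed.

Lemma ReR k : cRe k%:C = k.
Proof. by []. Qed.

Lemma Re_sum (T : Type) (r : seq T) (F : T -> R[i]) :
  cRe (\sum_(i <- r) F i) = \sum_(i <- r) cRe (F i).
Proof.
elim: r => [|x r IH]; first by rewrite !big_nil.
by rewrite !big_cons ReD IH.
Qed.

Lemma conjc_sum (T : Type) (r : seq T) (F : T -> R[i]) :
  conjc (\sum_(i <- r) F i) = \sum_(i <- r) conjc (F i).
Proof.
elim: r => [|x r IH]; first by rewrite !big_nil conjc0.
by rewrite !big_cons -IH; exact: rmorphD.
Qed.

Lemma conjcM z w : conjc (z * w) = conjc z * conjc w.
Proof. exact: rmorphM. Qed.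

Lemma conjcD z w : conjc (z + w) = conjc z + conjc w.
Proof. exact: rmorphD. Qed.

Lemma conjcN z : conjc (- z) = - conjc z.
Proof. exact: rmorphN. Qed.

Lemma conjcB z w : conjc (z - w) = conjc z - conjc w.
Proof. exact: rmorphB. Qed.

Lemma conjcR k : conjc k%:C = k%:C.
Proof. exact: conjc_real. Qed.

Lemma ReM_conj z : cRe (z * conjc z) = cmod z ^+ 2.
Proof. by rewrite cmodJ2. Qed.

Lemma cmod_sum (T : Type) (r : seq T) (F : T -> R[i]) :
  cmod (\sum_(i <- r) F i) <= \sum_(i <- r) cmod (F i).
Proof.
elim: r => [|x r IH]; first by rewrite !big_nil cmod0.
rewrite !big_cons; apply: (le_trans (cmodD _ _)); exact: lerD.
Qed.

End CmodFacts.

Section IPBasics.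
Variable R : realType.
Variable H : lmodType R[i].
Variable ip : H -> H -> R[i].
Hypothesis hip : is_inner_product ip.
Local Notation nrm := (ipnorm ip).

Lemma ipDZl a x y z : ip (a *: x + y) z = a * ip x z + ip y z.
Proof. by move: hip => -[h _ _ _]; apply: h. Qed.

Lemma ipC x y : ip x y = conjc (ip y x).
Proof. by move: hip => -[_ h _ _]; apply: h. Qed.

Lemma ip_ge0 x : 0 <= ip x x.
Proof. by move: hip => -[_ _ h _]; apply: h. Qed.

Lemma ip_eq0 x : ip x x = 0 -> x = 0.
Proof. by move: hip => -[_ _ _ h]; apply: h. Qed.

Lemma ip0l z : ip 0 z = 0.
Proof.
have := ipDZl 1 0 0 z; rewrite scaler0 addr0 mul1r => h.
by apply: (addrI (ip 0 z)); rewrite addr0 -h.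
Qed.

Lemma ipDl x y z : ip (x + y) z = ip x z + ip y z.
Proof. by rewrite -[x in LHS]scale1r ipDZl mul1r. Qed.

Lemma ipZl a x z : ip (a *: x) z = a * ip x z.
Proof. by rewrite -[a *: x]addr0 ipDZl ip0l addr0. Qed.

Lemma ipNl x z : ip (- x) z = - ip x z.
Proof. by rewrite -scaleN1r ipZl mulN1r. Qed.

Lemma ipBl x y z : ip (x - y) z = ip x z - ip y z.
Proof. by rewrite ipDl ipNl. Qed.

Lemma ip0r z : ip z 0 = 0.
Proof. by rewrite ipC ip0l conjc0. Qed.

Lemma ipDr x y z : ip z (x + y) = ip z x + ip z y.
Proof. by rewrite ipC ipDl conjcD -!ipC. Qed.

Lemma ipZr a x z : ip z (a *: x) = conjc a * ip z x.
Proof. by rewrite ipC ipZl conjcM -ipC. Qed.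

Lemma ipNr x z : ip z (- x) = - ip z x.
Proof. by rewrite ipC ipNl conjcN -ipC. Qed.

Lemma ipBr x y z : ip z (x - y) = ip z x - ip z y.
Proof. by rewrite ipDr ipNr. Qed.

Lemma ip_suml (T : Type) (r : seq T) (F : T -> H) z :
  ip (\sum_(i <- r) F i) z = \sum_(i <- r) ip (F i) z.
Proof.
elim: r => [|x r IH]; first by rewrite !big_nil ip0l.
by rewrite !big_cons ipDl IH.
Qed.

Lemma ip_sumr (T : Type) (r : seq T) (F : T -> H) z :
  ip z (\sum_(i <- r) F i) = \sum_(i <- r) ip z (F i).
Proof.
elim: r => [|x r IH]; first by rewrite !big_nil ip0r.
by rewrite !big_cons ipDr IH.
Qed.

Lemma ip_Im0 x : complex.Im (ip x x) = 0.
Proof. by have := ip_ge0 x; rewrite lecE /= => /andP[/eqP <- _]. Qed.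

Lemma ip_Re_ge0 x : 0 <= complex.Re (ip x x).
Proof. by have := ip_ge0 x; rewrite lecE /= => /andP[_ ->]. Qed.

Lemma ip_real x : ip x x = (complex.Re (ip x x))%:C.
Proof. by move: (ip_Im0 x); case: (ip x x) => a b /= ->. Qed.

Lemma nrm_ge0 x : 0 <= nrm x.
Proof. exact: sqrtr_ge0. Qed.

Lemma nrm2 x : nrm x ^+ 2 = complex.Re (ip x x).
Proof. by rewrite /ipnorm sqr_sqrtr // ip_Re_ge0. Qed.

Lemma ip_nrm x : ip x x = (nrm x ^+ 2)%:C.
Proof. by rewrite nrm2 -ip_real. Qed.

Lemma nrm0 : nrm 0 = 0.
Proof. by rewrite /ipnorm ip0l sqrtr0. Qed.

Lemma nrm_eq0 x : nrm x = 0 -> x = 0.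
Proof.
move=> h; apply: ip_eq0; rewrite ip_nrm h expr0n /=; done.
Qed.

Lemma nrmZ a x : nrm (a *: x) = cmod a * nrm x.
Proof.
apply/eqP; rewrite -(eqrXn2 (n:=2)) //; last by rewrite mulr_ge0 ?cmod_ge0 ?nrm_ge0.
  by rewrite nrm2 ipZl ipZr mulrA cmodJ2 ip_nrm -rmorphM /= exprMn.
by rewrite nrm_ge0.
Qed.

Lemma nrmN x : nrm (- x) = nrm x.
Proof. by rewrite -scaleN1r nrmZ cmodN (@cmodR R 1) normr1 mul1r. Qed.

Lemma nrmB x y : nrm (x - y) = nrm (y - x).
Proof. by rewrite -nrmN opprB. Qed.

Lemma cauchy_schwarz x y : cmod (ip x y) <= nrm x * nrm y.
Proof.
have [y0|yn0] := eqVneq (nrm y) 0.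
  by rewrite (@nrm_eq0 y y0) ip0r cmod0 nrm0 mulr0.
have cpos : 0 < nrm y ^+ 2 by rewrite exprn_gt0 // lt_def yn0 nrm_ge0.
set c := nrm y ^+ 2.
set a := ip x y.
set t := a / c%:C.
have cC0 : c%:C != 0 by apply/eqP => -[] /eqP; rewrite gt_eqF.
have hkey : ip (x - t *: y) (x - t *: y) = ip x x - (cmod a ^+ 2 / c)%:C.
  rewrite ipBl !ipBr !ipZl !ipZr -/a (ipC y x) -/a (ip_nrm y) -/c.
  rewrite /t conjcM conjc_inv conjcR.
  rewrite [(_ / c)%:C]rmorphM /= -cmodJ2 rmorphV; last by rewrite unitfE gt_eqF.
  by field.
have := ip_Re_ge0 (x - t *: y); rewrite hkey ReB ReR -nrm2 subr_ge0.
rewrite ler_pdivrMr // => h.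
rewrite -(@ler_pXn2r _ 2) ?nnegrE ?cmod_ge0 ?mulr_ge0 ?nrm_ge0 //.
by rewrite exprMn.
Qed.

Lemma nrmD x y : nrm (x + y) <= nrm x + nrm y.
Proof.
rewrite -(@ler_pXn2r _ 2) ?nnegrE ?addr_ge0 ?nrm_ge0 //.
rewrite nrm2 ipDl !ipDr ReD !ReD -!nrm2 sqrrD.
have h1 : complex.Re (ip x y) <= nrm x * nrm y.
  exact: le_trans (Re_le_cmod _) (cauchy_schwarz x y).
have h2 : complex.Re (ip y x) <= nrm x * nrm y.
  by rewrite mulrC; exact: le_trans (Re_le_cmod _) (cauchy_schwarz y x).
lra.
Qed.

Lemma nrm_tri x y z : nrm (x - z) <= nrm (x - y) + nrm (y - z).
Proof. by rewrite -[x - z](subrKA y) nrmD. Qed.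

Lemma nrm_lip x y : `|nrm x - nrm y| <= nrm (x - y).
Proof.
have h1 := nrmD (y - x) x; have h2 := nrmD (x - y) y.
rewrite !subrK nrmB in h1 h2.
rewrite ler_norml; apply/andP; split; lra.
Qed.

Lemma ip_lipl x y z : cmod (ip x z - ip y z) <= nrm (x - y) * nrm z.
Proof. by rewrite -ipBl cauchy_schwarz. Qed.

Lemma ip_lipr x y z : cmod (ip z x - ip z y) <= nrm z * nrm (x - y).
Proof. by rewrite -ipBr cauchy_schwarz. Qed.

End IPBasics.

Local Open Scope complex_scope.

Section FsetSums.
Variable (T : choiceType) (V : nmodType).

Lemma sum_restrict (J J' : {fset T}) (F : T -> V) : (J `<=` J')%fset ->
  \sum_(i <- J) F i = \sum_(i <- J') (if i \in J then F i else 0).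
Proof.
move=> sJ; rewrite (eq_big_seq (fun i => if i \in J then F i else 0)); last by move=> i ->.
by apply: big_fset_incl sJ _ => x _ /negbTE ->.
Qed.

Lemma fset_sub_inJ (J0 J : {fset T}) : (J0 `<=` J)%fset ->
  [fset x in J | x \in J0]%fset = J0.
Proof.
move=> sJ; apply/fsetP => x; rewrite !inE.
by apply/idP/idP => [/andP[]//|h]; rewrite h (fsubsetP sJ).
Qed.

Lemma fset_sub_notinJ (J0 J : {fset T}) :
  [fset x in J | x \notin J0]%fset = (J `\` J0)%fset.
Proof. by apply/fsetP => x; rewrite !inE andbC. Qed.

Lemma sum_split (J0 J : {fset T}) (F : T -> V) : (J0 `<=` J)%fset ->
  \sum_(i <- J) F i = \sum_(i <- J0) F i + \sum_(i <- (J `\` J0)%fset) F i.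
Proof.
move=> sJ; rewrite (big_fsetID _ (fun x => x \in J0)) /=.
by rewrite fset_sub_inJ // fset_sub_notinJ.
Qed.

End FsetSums.

Section FsetSumsR.
Variable (T : choiceType) (R : realType).

Lemma sum_mono (J J' : {fset T}) (r : T -> R) : (forall i, 0 <= r i) ->
  (J `<=` J')%fset -> \sum_(i <- J) r i <= \sum_(i <- J') r i.
Proof.
move=> r0 sJ; rewrite (@sum_restrict _ _ J J' r sJ); apply: ler_sum => i _.
by case: ifP.
Qed.

Lemma sum_ge0' (J : {fset T}) (r : T -> R) : (forall i, 0 <= r i) ->
  0 <= \sum_(i <- J) r i.
Proof. by move=> r0; apply: sumr_ge0. Qed.

End FsetSumsR.

Lemma pos_small (R : realType) (a : R) : (forall e, 0 < e -> a <= e) -> a <= 0.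
Proof.
move=> h; case: (lerP a 0) => // a0.
have := h (a / 2); rewrite divr_gt0 // => /(_ isT); lra.
Qed.

Lemma nonneg_small (R : realType) (a : R) : 0 <= a -> (forall e, 0 < e -> a < e) -> a = 0.
Proof.
move=> a0 h; apply/eqP; rewrite eq_le a0 andbT; apply: pos_small => e /h /ltW //.
Qed.

Section Usum.
Variable R : realType.
Variable H : lmodType R[i].
Variable ip : H -> H -> R[i].
Hypothesis hip : is_inner_product ip.
Variable I : countType.
Local Notation nrm := (ipnorm ip).

Lemma nrm_small_eq0 (v : H) : (forall e, 0 < e -> nrm v < e) -> v = 0.
Proof. by move=> h; apply: (nrm_eq0 hip); apply: nonneg_small (nrm_ge0 _ _) h. Qed.

Lemma cmod_small_eq0 (z : R[i]) : (forall e, 0 < e -> cmod z < e) -> z = 0.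
Proof. by move=> h; apply: cmod_eq0; apply: nonneg_small (cmod_ge0 _) h. Qed.

Lemma usum_uniq (x : I -> H) l1 l2 : has_usum ip x l1 -> has_usum ip x l2 -> l1 = l2.
Proof.
move=> h1 h2; apply/eqP; rewrite -subr_eq0; apply/eqP; apply: nrm_small_eq0 => e e0.
have e2 : 0 < e / 2 by rewrite divr_gt0.
have [J1 hJ1] := h1 _ e2; have [J2 hJ2] := h2 _ e2.
have := hJ1 (J1 `|` J2)%fset (fsubsetUl _ _).
have := hJ2 (J1 `|` J2)%fset (fsubsetUr _ _).
set S := \sum_(i <- _) _ => a b.
have := nrm_tri hip l1 S l2; rewrite (nrmB hip l1 S) => c.
lra.
Qed.

Lemma usumC_uniq (x : I -> R[i]) l1 l2 : has_usumC x l1 -> has_usumC x l2 -> l1 = l2.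
Proof.
move=> h1 h2; apply/eqP; rewrite -subr_eq0; apply/eqP; apply: cmod_small_eq0 => e e0.
have e2 : 0 < e / 2 by rewrite divr_gt0.
have [J1 hJ1] := h1 _ e2; have [J2 hJ2] := h2 _ e2.
have := hJ1 (J1 `|` J2)%fset (fsubsetUl _ _).
have := hJ2 (J1 `|` J2)%fset (fsubsetUr _ _).
set S := \sum_(i <- _) _ => a b.
have := cmodD (l1 - S) (S - l2); rewrite addrA subrK cmodB => c.
lra.
Qed.

Lemma usum_ipl (x : I -> H) l z : has_usum ip x l ->
  has_usumC (fun i => ip (x i) z) (ip l z).
Proof.
move=> h e e0.
have e' : 0 < e / (nrm z + 1) by rewrite divr_gt0 // ltr_wpDl ?nrm_ge0.
have [J0 hJ0] := h _ e'; exists J0 => J /hJ0 hJ.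
rewrite -ip_suml // -ipBl //; apply: (le_lt_trans (cauchy_schwarz hip _ _)).
have nz := nrm_ge0 ip z.
rewrite ltr_pdivlMr ?ltr_wpDl // in hJ.
have := nrm_ge0 ip (\sum_(i <- J) x i - l).
nra.
Qed.

Lemma usum_ipr (x : I -> H) l z : has_usum ip x l ->
  has_usumC (fun i => ip z (x i)) (ip z l).
Proof.
move=> h e e0; have [J0 hJ0] := usum_ipl z h e0; exists J0 => J /hJ0 hJ.
under eq_bigr do rewrite (ipC hip z).
by rewrite (ipC hip z l) -conjc_sum -conjcB cmodJ.
Qed.

Lemma usumC_conj (x : I -> R[i]) l : has_usumC x l ->
  has_usumC (fun i => conjc (x i)) (conjc l).
Proof.
move=> h e e0; have [J0 hJ0] := h e e0; exists J0 => J /hJ0.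
by rewrite -conjc_sum -conjcB cmodJ.
Qed.

Lemma usum_add (x y : I -> H) lx ly : has_usum ip x lx -> has_usum ip y ly ->
  has_usum ip (fun i => x i + y i) (lx + ly).
Proof.
move=> hx hy e e0.
have e2 : 0 < e / 2 by rewrite divr_gt0.
have [J1 hJ1] := hx _ e2; have [J2 hJ2] := hy _ e2.
exists (J1 `|` J2)%fset => J sJ.
have := hJ1 J (fsubset_trans (fsubsetUl _ _) sJ).
have := hJ2 J (fsubset_trans (fsubsetUr _ _) sJ).
rewrite big_split /= => a b.
have := nrmD hip (\sum_(i <- J) x i - lx) (\sum_(i <- J) y i - ly).
have -> : \sum_(i <- J) x i - lx + (\sum_(i <- J) y i - ly) =
   \sum_(i <- J) x i + \sum_(i <- J) y i - (lx + ly).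
  by rewrite opprD !addrA; congr (_ + _); rewrite addrAC.
lra.
Qed.

Lemma usum_scale (x : I -> H) l a : has_usum ip x l ->
  has_usum ip (fun i => a *: x i) (a *: l).
Proof.
move=> h e e0.
have e' : 0 < e / (cmod a + 1) by rewrite divr_gt0 // ltr_wpDl ?cmod_ge0.
have [J0 hJ0] := h _ e'; exists J0 => J /hJ0 hJ.
rewrite -scaler_sumr -scalerBr nrmZ //.
have := cmod_ge0 a.
have := nrm_ge0 ip (\sum_(i <- J) x i - l).
rewrite ltr_pdivlMr ?ltr_wpDl ?cmod_ge0 // in hJ.
nra.
Qed.

Lemma usum_ext (x y : I -> H) l : (forall i, x i = y i) -> has_usum ip x l -> has_usum ip y l.
Proof. by move=> e; have -> : x = y by apply: funext. Qed.

Lemma usum_opp (x : I -> H) l : has_usum ip x l ->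
  has_usum ip (fun i => - x i) (- l).
Proof.
move=> h; rewrite -scaleN1r.
by apply: usum_ext (usum_scale (-1) h) => i; rewrite scaleN1r.
Qed.

Lemma usumC_ext (x y : I -> R[i]) l : (forall i, x i = y i) -> has_usumC x l -> has_usumC y l.
Proof. by move=> e; have -> : x = y by apply: funext. Qed.

Lemma usumC_add (x y : I -> R[i]) lx ly : has_usumC x lx -> has_usumC y ly ->
  has_usumC (fun i => x i + y i) (lx + ly).
Proof.
move=> hx hy e e0.
have e2 : 0 < e / 2 by rewrite divr_gt0.
have [J1 hJ1] := hx _ e2; have [J2 hJ2] := hy _ e2.
exists (J1 `|` J2)%fset => J sJ.
have := hJ1 J (fsubset_trans (fsubsetUl _ _) sJ).
have := hJ2 J (fsubset_trans (fsubsetUr _ _) sJ).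
rewrite big_split /= => a b.
have := cmodD (\sum_(i <- J) x i - lx) (\sum_(i <- J) y i - ly).
have -> : \sum_(i <- J) x i - lx + (\sum_(i <- J) y i - ly) =
   \sum_(i <- J) x i + \sum_(i <- J) y i - (lx + ly).
  by rewrite opprD !addrA; congr (_ + _); rewrite addrAC.
lra.
Qed.

Lemma usumC_opp (x : I -> R[i]) l : has_usumC x l ->
  has_usumC (fun i => - x i) (- l).
Proof.
move=> h e e0; have [J0 hJ0] := h e e0; exists J0 => J /hJ0.
by rewrite sumrN -opprD cmodN.
Qed.

Lemma usumC_sub (x y : I -> R[i]) lx ly : has_usumC x lx -> has_usumC y ly ->
  has_usumC (fun i => x i - y i) (lx - ly).
Proof. by move=> hx hy; apply: usumC_add hx (usumC_opp hy). Qed.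

Lemma sumC_real (J : {fset I}) (r : I -> R) :
  \sum_(i <- J) (r i)%:C = (\sum_(i <- J) r i)%:C.
Proof. by rewrite rmorph_sum. Qed.

Lemma usumC_real (r : I -> R) L : (forall i, 0 <= r i) ->
  has_usumC (fun i => (r i)%:C) L ->
  cIm L = 0 /\ forall J : {fset I}, \sum_(i <- J) r i <= cRe L.
Proof.
move=> r0 h; split.
  apply/eqP; rewrite -normr_eq0; apply/eqP; apply: nonneg_small => // e e0.
  have [J0 hJ0] := h e e0; have := hJ0 J0 (fsubset_refl _).
  apply: le_lt_trans; apply: le_trans (absIm_le_cmod _); rewrite ImB sumC_real /=.
  by rewrite sub0r normrN.
move=> J; rewrite -subr_le0; apply: pos_small => e e0.
have [J0 hJ0] := h e e0; have := hJ0 (J0 `|` J)%fset (fsubsetUl _ _).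
rewrite sumC_real => h1.
have h2 := le_trans (Re_le_cmod _) (ltW h1); rewrite ReB ReR in h2.
have := sum_mono r0 (fsubsetUr J0 J).
lra.
Qed.

Lemma usumC_le (r : I -> R) L M :
  (forall J : {fset I}, \sum_(i <- J) r i <= M) ->
  has_usumC (fun i => (r i)%:C) L -> cRe L <= M.
Proof.
move=> hM h; rewrite -subr_le0; apply: pos_small => e e0.
have [J0 hJ0] := h e e0; have := hJ0 J0 (fsubset_refl _).
rewrite sumC_real => h1.
have h2 : cRe (L - (\sum_(i <- J0) r i)%:C) <= e.
  by apply: le_trans (Re_le_cmod _) _; rewrite cmodB; exact: ltW.
rewrite ReB ReR in h2.
have := hM J0.
lra.
Qed.

End Usum.

Local Open Scope complex_scope.

Section DualFacts.
Variable R : realType.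
Variable H : lmodType R[i].
Variable ip : H -> H -> R[i].
Hypothesis hip : is_inner_product ip.
Variable I : countType.
Variable f : I -> H.
Local Notation nrm := (ipnorm ip).

Lemma frame_op_eq g l : has_usum ip (fun j => ip g (f j) *: f j) l -> frame_op ip f g = l.
Proof.
move=> h; rewrite /frame_op; apply: xget_unique => // y hy.
exact: (usum_uniq hip (hy : has_usum _ _ _) h).
Qed.

Lemma frame_op_spec g : (exists l, has_usum ip (fun j => ip g (f j) *: f j) l) ->
  has_usum ip (fun j => ip g (f j) *: f j) (frame_op ip f g).
Proof. by move=> [l hl]; rewrite (frame_op_eq hl). Qed.

Lemma ip_frame_term g j : ip (ip g (f j) *: f j) g = (cmod (ip g (f j)) ^+ 2)%:C.
Proof. by rewrite (ipZl hip) (ipC hip (f j) g) cmodJ2. Qed.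

Lemma usum_frame_ip g l : has_usum ip (fun j => ip g (f j) *: f j) l ->
  has_usumC (fun j => (cmod (ip g (f j)) ^+ 2)%:C) (ip l g).
Proof.
move=> h; apply: usumC_ext (usum_ipl hip g h) => j; exact: ip_frame_term.
Qed.

Lemma dual_val g i : has_usum ip (fun j => ip g (f j) *: f j) (f i) ->
  ip (f i) g = (cRe (ip (f i) g))%:C /\ 0 <= cRe (ip (f i) g) <= 1.
Proof.
move=> h; have [hIm hle] := usumC_real (fun j => sqr_ge0 _) (usum_frame_ip h).
have hx : ip (f i) g = (cRe (ip (f i) g))%:C.
  by move: hIm; case: (ip (f i) g) => a b /= ->.
split => //.
have := hle [fset i]%fset; rewrite big_seq_fset1.
rewrite (ipC hip g (f i)) cmodJ hx cmodR real_normK ?num_real // => h1.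
apply/andP; split.
  exact: le_trans (sqr_ge0 _) h1.
move: h1; set x := cRe _ => h1.
have : 0 <= x by exact: le_trans (sqr_ge0 _) h1.
nra.
Qed.

Lemma dual_bound i : 0 <= cRe (ip (f i) (canonical_dual ip f i)) <= 1.
Proof.
rewrite /canonical_dual.
case: (pselect (exists g, closed_span ip f g /\ frame_op ip f g = f i)) => [exg|nexg]; last first.
  by rewrite xgetPN ?ip0r // ?ReR ?lexx ?ler01 // => g hg; apply: nexg; exists g.
have [_ ] := xgetPex 0 exg; set g := xget _ _ => hg.
case: (pselect (exists l, has_usum ip (fun j => ip g (f j) *: f j) l)) => [ex|nex].
  have := frame_op_spec ex; rewrite hg => hl.
  by case: (dual_val hl).
have : frame_op ip f g = 0.
  by rewrite /frame_op; apply: xgetPN => l hl; apply: nex; exists l.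
by rewrite hg => ->; rewrite ip0l // ReR lexx ler01.
Qed.

End DualFacts.

Section Ultra.
Variable R : realType.

Section OneP.
Variable p : set_system nat.
Hypothesis hp : free_ultrafilter p.

Lemma fuT : p setT. Proof. by move: hp => -[[h _] _ _ _ _]. Qed.
Lemma fu0 : ~ p set0. Proof. by move: hp => -[[_ h] _ _ _ _]. Qed.
Lemma fuI A B : p A -> p B -> p (A `&` B). Proof. by move: hp => -[_ h _ _ _]; apply: h. Qed.
Lemma fuS A B : A `<=` B -> p A -> p B. Proof. by move: hp => -[_ _ h _ _]; apply: h. Qed.
Lemma fuU A : p A \/ p (~` A). Proof. by move: hp => -[_ _ _ h _]; apply: h. Qed.
Lemma fuF A : finite_set A -> ~ p A. Proof. by move: hp => -[_ _ _ _ h]; apply: h. Qed.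

Lemma fu_ne A : p A -> exists n, A n.
Proof.
move=> pA; apply: contrapT => hn; apply: fu0; apply: fuS pA => n An.
by apply: hn; exists n.
Qed.

Lemma fu_cofin (A : set nat) N : (forall n, (N <= n)%N -> A n) -> p A.
Proof.
move=> hA; case: (fuU A) => // pC; exfalso.
apply: (fuF (finite_II N)); apply: fuS pC => n /= nA.
by rewrite ltnNge; apply/negP => /hA.
Qed.

Definition plim_prop (x : nat -> R) (c : R) :=
  forall e : R, 0 < e -> p [set n | `|x n - c| < e].

Lemma plim_ex (x : nat -> R) M : (forall n, `|x n| <= M) -> exists c, plim_prop x c.
Proof.
move=> hb.
pose S := [set c : R | p [set n | c <= x n]].
have S0 : S (- M).
  apply: fuS fuT => n _; have := hb n; rewrite ler_norml => /andP[] //.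
have Sub : ubound S M.
  move=> c Sc; have [n hn] := fu_ne Sc; apply: le_trans hn _.
  by have := hb n; rewrite ler_norml => /andP[].
have hS : has_sup S by split; [exists (- M) | exists M].
exists (sup S) => e e0.
have [c Sc hc] := sup_adherent e0 hS.
have p1 : p [set n | sup S - e < x n].
  by apply: fuS Sc => n /= h; apply: lt_le_trans hc h.
have p2 : p [set n | x n < sup S + e].
  case: (fuU [set n | x n < sup S + e]) => // pC; exfalso.
  have : S (sup S + e).
    by apply: fuS pC => n /= /negP; rewrite -leNgt.
  move/(sup_upper_bound hS); lra.
apply: fuS (fuI p1 p2) => n /= [h1 h2]; rewrite ltr_norml; apply/andP; split; lra.
Qed.

Lemma plim_uniq (x : nat -> R) c1 c2 : plim_prop x c1 -> plim_prop x c2 -> c1 = c2.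
Proof.
move=> h1 h2; apply/eqP; rewrite -subr_eq0 -normr_eq0; apply/eqP.
apply: nonneg_small => // e e0.
have e2 : 0 < e / 2 by rewrite divr_gt0.
have [n [hn1 hn2]] := fu_ne (fuI (h1 _ e2) (h2 _ e2)).
have := ler_normB (x n - c2) (x n - c1).
have -> : x n - c2 - (x n - c1) = c1 - c2 by ring.
move: hn1 hn2; rewrite /= => hn1 hn2.
lra.
Qed.

Lemma plimP (x : nat -> R) M : (forall n, `|x n| <= M) -> plim_prop x (plim p x).
Proof. by move=> hb; rewrite /plim; apply: xgetPex; apply: plim_ex hb. Qed.

Lemma plim_eq (x : nat -> R) c : plim_prop x c -> plim p x = c.
Proof.
move=> hc; rewrite /plim; apply: xget_unique => // c' hc'.
exact: plim_uniq hc' hc.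
Qed.

Lemma plim_add (x y : nat -> R) Mx My : (forall n, `|x n| <= Mx) -> (forall n, `|y n| <= My) ->
  plim p (fun n => x n + y n) = plim p x + plim p y.
Proof.
move=> hx hy; apply: plim_eq => e e0.
have e2 : 0 < e / 2 by rewrite divr_gt0.
apply: fuS (fuI (plimP hx e2) (plimP hy e2)) => n /= [h1 h2].
have := ler_normD (x n - plim p x) (y n - plim p y).
have -> : x n - plim p x + (y n - plim p y) = x n + y n - (plim p x + plim p y) by ring.
lra.
Qed.

Lemma plim_opp (x : nat -> R) Mx : (forall n, `|x n| <= Mx) ->
  plim p (fun n => - x n) = - plim p x.
Proof.
move=> hx; apply: plim_eq => e e0.
apply: fuS (plimP hx e0) => n /=.
by rewrite -opprD normrN.
Qed.

Lemma plim_sub (x y : nat -> R) Mx My : (forall n, `|x n| <= Mx) -> (forall n, `|y n| <= My) ->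
  plim p (fun n => x n - y n) = plim p x - plim p y.
Proof.
move=> hx hy; rewrite (plim_add hx (y := fun n => - y n) (My := My)); last first.
  by move=> n; rewrite normrN.
by rewrite (plim_opp hy).
Qed.

Lemma plim_ge (x : nat -> R) M c : (forall n, `|x n| <= M) ->
  p [set n | c <= x n] -> c <= plim p x.
Proof.
move=> hb hc; rewrite leNgt; apply/negP => hlt.
have e0 : 0 < c - plim p x by rewrite subr_gt0.
have [n [h1 h2]] := fu_ne (fuI hc (plimP hb e0)).
move: h1 h2; rewrite /= ltr_norml => h1 /andP[_ h2]; lra.
Qed.

Lemma plim_le (x : nat -> R) M c : (forall n, `|x n| <= M) ->
  p [set n | x n <= c] -> plim p x <= c.
Proof.
move=> hb hc; rewrite leNgt; apply/negP => hlt.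
have e0 : 0 < plim p x - c by rewrite subr_gt0.
have [n [h1 h2]] := fu_ne (fuI hc (plimP hb e0)).
move: h1 h2; rewrite /= ltr_norml => h1 /andP[h2 _]; lra.
Qed.

End OneP.

Lemma exists_fu (A : set nat) : (forall N, exists n, (N <= n)%N /\ A n) ->
  exists q : Nstar, proj1_sig q A.
Proof.
move=> hA.
pose F := [set B : set nat | exists N, forall n, (N <= n)%N -> A n -> B n].
have FF : ProperFilter F.
  split.
    move=> [N hN]; have [n [hn An]] := hA N; exact: (hN n hn An).
  split.
  - by exists 0%N.
  - move=> B C [N1 h1] [N2 h2]; exists (maxn N1 N2) => n hn An; split.
      by apply: h1 => //; apply: leq_trans hn; rewrite leq_maxl.
    by apply: h2 => //; apply: leq_trans hn; rewrite leq_maxr.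
  - by move=> B C BC [N h]; exists N => n hn An; apply: BC; apply: h.
have [G [UG FG]] := ultraFilterLemma FF.
have PG : ProperFilter G by apply: ultra_proper.
have fG : free_ultrafilter G.
  split.
  - split; first exact: filterT.
    exact: filter_not_empty.
  - by move=> B C; apply: filterI.
  - by move=> B C; apply: filterS.
  - by move=> B; apply: in_ultra_setVsetC.
  - move=> S fS GS.
    have [X eX] := finite_fsetP.1 fS.
    pose N := (\max_(k <- X) k).+1.
    have GC : G (~` S).
      apply: FG; exists N => n hn _; rewrite eX /= => nX.
      have : (n <= \max_(k <- X) k)%N by apply: leq_bigmax_seq.
      by rewrite leqNgt hn.
    apply: (filter_not_empty G); apply: filterS (filterI GS GC).
    by move=> n [].
exists (exist _ G fG) => /=.
apply: FG; exists 0%N => n _ //.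
Qed.

End Ultra.

Section Chars.
Variable R : realType.

Lemma Nstar_fu (q : Nstar) : free_ultrafilter (proj1_sig q).
Proof. exact: (proj2_sig q). Qed.

Lemma char_cvg0 (z : nat -> R) M : (forall n, `|z n| <= M) ->
  (forall q : Nstar, plim (proj1_sig q) z = 0) <-> z @ \oo --> (0 : R).
Proof.
move=> hb; split.
  move=> h; apply/cvgrPdist_lt => e e0.
  apply: contrapT => hne.
  have hA : forall N, exists n, (N <= n)%N /\ e <= `|z n|.
    move=> N; apply: contrapT => hN; apply: hne; exists N => // n /= hn.
    rewrite sub0r normrN ltNge; apply/negP => hle; apply: hN; exists n; split => //.
  have [q hq] := exists_fu hA.
  have hp := Nstar_fu q.
  have := plimP hp hb e0; rewrite h => h2.
  have [n [h3 h4]] := fu_ne hp (fuI hp hq h2).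
  move: h3 h4 => /= h3; rewrite subr0; lra.
move=> hc q; have hp := Nstar_fu q; apply: plim_eq => // e e0.
have [N _ hN] := (cvgrPdist_lt _ _).1 hc e e0.
apply: (fu_cofin hp (N := N)) => n hn /=; have := hN n hn.
by rewrite sub0r normrN subr0.
Qed.

Lemma char_liminf (z : nat -> R) M : (forall n, `|z n| <= M) ->
  (forall q : Nstar, 0 <= plim (proj1_sig q) z) <->
  (0 <= limn_einf (fun n => (z n)%:E))%E.
Proof.
move=> hb; rewrite limn_einf_lim; split.
  move=> h.
  have ev : forall e, 0 < e -> exists N, forall n, (N <= n)%N -> - e <= z n.
    move=> e e0; apply: contrapT => hne.
    have hA : forall N, exists n, (N <= n)%N /\ z n <= - e.
      move=> N; apply: contrapT => hN; apply: hne; exists N => n hn.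
      rewrite leNgt; apply/negP => hlt; apply: hN; exists n; split => //; exact: ltW.
    have [q hq] := exists_fu hA.
    have hp := Nstar_fu q.
    have := plim_le hp hb hq; have := h q; lra.
  have key : forall e, 0 < e -> ((- e)%:E <= limn (einfs (fun n => (z n)%:E))%E)%E.
    move=> e e0; have [N hN] := ev e e0.
    apply: lime_ge; first exact: is_cvg_einfs.
    exists N => // n /= hn; apply: le_ereal_inf_tmp => _ [k /= hk <-].
    by rewrite lee_fin; apply: hN; apply: leq_trans hk.
  move: key; case: (limn _) => [r| |] key //.
    rewrite lee_fin; rewrite -[r]opprK oppr_ge0; apply: pos_small => e e0.
    by have := key e e0; rewrite lee_fin lerNl.
  by have := key 1 ltr01.
move=> h q; have hp := Nstar_fu q.
rewrite -[plim _ _]opprK oppr_ge0; apply: pos_small => e e0.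
rewrite lerNl.
have [N hN] : exists N, ((- e)%:E < einfs (fun n => (z n)%:E) N)%E.
  apply: contrapT => hne.
  have : (limn (einfs (fun n => (z n)%:E)) <= (- e)%:E)%E.
    apply: lime_le; first exact: is_cvg_einfs.
    exists 0%N => // n _; rewrite leNgt; apply/negP => hlt; apply: hne; exists n => //.
  move=> hle; have := le_trans h hle; rewrite lee_fin; lra.
apply: (plim_ge hp hb); apply: (fu_cofin hp (N := N)) => n hn /=.
have : (einfs (fun n => (z n)%:E) N <= (z n)%:E)%E.
  by apply: ereal_inf_lbound; exists n.
by move=> h2; have := lt_le_trans hN h2; rewrite lte_fin => /ltW.
Qed.

End Chars.

Local Open Scope complex_scope.

Section Parts12.
Variable R : realType.
Variable I : countType.
Variable In : nat -> {fset I}.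

Lemma sum_le_size (s : seq I) (F : I -> R) : (forall i, F i <= 1) ->
  \sum_(i <- s) F i <= (size s)%:R.
Proof.
move=> h; elim: s => [|x s IH]; first by rewrite big_nil.
by rewrite big_cons /= -add1n natrD lerD.
Qed.

Lemma aseq_bound (H : lmodType R[i]) (ip : H -> H -> R[i]) (f : I -> H) :
  is_inner_product ip -> forall n, `|frame_aseq In ip f n| <= 1.
Proof.
move=> hip n; rewrite /frame_aseq /frame_bseq Re_sum.
set s := \sum_(i <- _) _.
have s0 : 0 <= s by apply: sumr_ge0 => i _; case/andP: (dual_bound hip f i).
have s1 : s <= (#|` In n|)%:R.
  by apply: sum_le_size => i; case/andP: (dual_bound hip f i).
case: (posnP #|` In n|) => [->|k0].
  by rewrite invr0 mulr0 normr0.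
have kp : 0 < (#|` In n|)%:R :> R by rewrite ltr0n.
rewrite ger0_norm ?divr_ge0 // ler_pdivrMr // mul1r //.
Qed.

Lemma aseq_diff (H1 H2 : lmodType R[i]) (ip1 : H1 -> H1 -> R[i]) (ip2 : H2 -> H2 -> R[i])
  (f1 : I -> H1) (f2 : I -> H2) n :
  (frame_bseq In ip1 f1 n - frame_bseq In ip2 f2 n) / (#|` In n|)%:R =
  frame_aseq In ip1 f1 n - frame_aseq In ip2 f2 n.
Proof. by rewrite /frame_aseq mulrBl. Qed.

Lemma part1 (H1 H2 : lmodType R[i]) (ip1 : H1 -> H1 -> R[i]) (ip2 : H2 -> H2 -> R[i])
  (f1 : I -> H1) (f2 : I -> H2) :
  is_inner_product ip1 -> is_inner_product ip2 ->
  (frame_measure In ip1 f1 = frame_measure In ip2 f2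
        <-> seq_approx In (frame_bseq In ip1 f1) (frame_bseq In ip2 f2)).
Proof.
move=> h1 h2.
have b1 := aseq_bound f1 h1; have b2 := aseq_bound f2 h2.
have bz : forall n, `|frame_aseq In ip1 f1 n - frame_aseq In ip2 f2 n| <= 2.
  move=> n; apply: le_trans (ler_normB _ _) _.
  by have := b1 n; have := b2 n; lra.
rewrite /seq_approx.
have -> : (fun n => (frame_bseq In ip1 f1 n - frame_bseq In ip2 f2 n) / (#|` In n|)%:R)
   = (fun n => frame_aseq In ip1 f1 n - frame_aseq In ip2 f2 n).
  by apply: funext => n; rewrite aseq_diff.
rewrite -(char_cvg0 bz); split.
  move=> e q; have hp := Nstar_fu q.
  rewrite (plim_sub hp b1 b2).
  have := congr1 (fun F => F q) e; rewrite /frame_measure /= => ->.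
  by rewrite subrr.
move=> h; apply: funext => q; have hp := Nstar_fu q.
have := h q; rewrite (plim_sub hp b1 b2) /frame_measure => /eqP.
by rewrite subr_eq0 => /eqP.
Qed.

Lemma part2 (H1 H2 : lmodType R[i]) (ip1 : H1 -> H1 -> R[i]) (ip2 : H2 -> H2 -> R[i])
  (f1 : I -> H1) (f2 : I -> H2) :
  is_inner_product ip1 -> is_inner_product ip2 ->
  ((forall p : Nstar, frame_measure In ip1 f1 p <= frame_measure In ip2 f2 p)
        <-> seq_leqq In (frame_bseq In ip1 f1) (frame_bseq In ip2 f2)).
Proof.
move=> h1 h2.
have b1 := aseq_bound f1 h1; have b2 := aseq_bound f2 h2.
have bz : forall n, `|frame_aseq In ip2 f2 n - frame_aseq In ip1 f1 n| <= 2.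
  move=> n; apply: le_trans (ler_normB _ _) _.
  by have := b1 n; have := b2 n; lra.
rewrite /seq_leqq.
have -> : (fun n => ((frame_bseq In ip2 f2 n - frame_bseq In ip1 f1 n) / (#|` In n|)%:R)%:E)
   = (fun n => (frame_aseq In ip2 f2 n - frame_aseq In ip1 f1 n)%:E).
  by apply: funext => n; rewrite aseq_diff.
rewrite -(char_liminf bz); split.
  move=> h q; have hp := Nstar_fu q.
  by rewrite (plim_sub hp b2 b1) subr_ge0; apply: h.
move=> h q; have hp := Nstar_fu q.
by have := h q; rewrite (plim_sub hp b2 b1) subr_ge0.
Qed.

End Parts12.

Local Open Scope complex_scope.

Section RealAux.
Variable R : realType.

Lemma small_inv (e : R) : 0 < e -> exists k : nat, 1 / (k.+1)%:R < e.
Proof.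
move=> e0; exists (Num.Def.trunc (1 / e)).
have h := truncnS_gt (1 / e).
rewrite ltr_pdivrMr ?ltr0n // mulrC -ltr_pdivrMr //.
Qed.

Lemma geo_small (s : R) : 0 <= s < 1 -> forall e, 0 < e ->
  exists N, forall n, (N <= n)%N -> s ^+ n < e.
Proof.
move=> /andP[s0 s1] e e0.
have hs : `|s| < 1 by rewrite ger0_norm.
have [N _ hN] := (cvgrPdist_lt _ _).1 (cvg_geometric 1 hs) e e0.
exists N => n hn; have := hN n hn; rewrite /= sub0r normrN mul1r.
by rewrite ger0_norm // exprn_ge0.
Qed.

Lemma tail_small (I : countType) (r : I -> R) M : (forall i, 0 <= r i) ->
  (forall J : {fset I}, \sum_(i <- J) r i <= M) ->
  forall e, 0 < e -> exists J0 : {fset I}, forall J : {fset I},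
    \sum_(i <- (J `\` J0)%fset) r i <= e.
Proof.
move=> r0 hM e e0; apply: contrapT => hne.
have step : forall J0 : {fset I}, exists J, e < \sum_(i <- (J `\` J0)%fset) r i.
  move=> J0; apply: contrapT => hJ; apply: hne; exists J0 => J.
  rewrite leNgt; apply/negP => hlt; apply: hJ; exists J => //.
have big : forall k : nat, exists J : {fset I}, k%:R * e <= \sum_(i <- J) r i.
  elim=> [|k [J hJ]]; first by exists fset0; rewrite mul0r big_seq_fset0.
  have [J' hJ'] := step J.
  exists (J `|` J')%fset.
  rewrite (sum_split _ (fsubsetUl J J')).
  have -> : ((J `|` J') `\` J)%fset = (J' `\` J)%fset.
    by apply/fsetP => x; rewrite !inE; case: (x \in J); rewrite ?andbF ?andbT.
  rewrite -addn1 natrD mulrDl mul1r; apply: lerD => //; exact: ltW.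
have M0 : 0 <= M by apply: le_trans (hM fset0); rewrite big_seq_fset0.
have [k hk] : exists k : nat, M / e < k%:R.
  by exists (Num.Def.trunc (M / e)).+1; apply: truncnS_gt.
have [J hJ] := big k; have := hM J.
rewrite ltr_pdivrMr // in hk.
lra.
Qed.

End RealAux.

Local Open Scope complex_scope.

Section Spans.
Variable R : realType.
Variable H : lmodType R[i].
Variable ip : H -> H -> R[i].
Hypothesis hip : is_inner_product ip.
Variable I : countType.
Variable f : I -> H.
Local Notation nrm := (ipnorm ip).
Local Notation W := (closed_span ip f).

Lemma lin_span_sum (J : {fset I}) (c : I -> R[i]) : lin_span f (\sum_(j <- J) c j *: f j).
Proof. by exists J, c. Qed.

Lemma lin_span_comb g1 g2 a : lin_span f g1 -> lin_span f g2 -> lin_span f (g1 + a *: g2).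
Proof.
move=> [J1 [c1 ->]] [J2 [c2 ->]].
exists (J1 `|` J2)%fset, (fun j => (if j \in J1 then c1 j else 0) + a * (if j \in J2 then c2 j else 0)).
rewrite (sum_restrict _ (fsubsetUl J1 J2)) (sum_restrict _ (fsubsetUr J1 J2)).
rewrite scaler_sumr -big_split /=; apply: eq_bigr => j _.
rewrite scalerDl -scalerA.
by case: (j \in J1); case: (j \in J2); rewrite ?scale0r ?mulr0 ?scaler0 ?add0r ?addr0.
Qed.

Lemma lin_span_W g : lin_span f g -> W g.
Proof. by move=> hg e e0; exists g; split => //; rewrite subrr nrm0. Qed.

Lemma W_comb x y a : W x -> W y -> W (x + a *: y).
Proof.
move=> hx hy e e0.
have e2 : 0 < e / 2 by rewrite divr_gt0.
have ea : 0 < e / 2 / (cmod a + 1) by rewrite divr_gt0 // ltr_wpDl ?cmod_ge0.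
have [g1 [s1 h1]] := hx _ e2; have [g2 [s2 h2]] := hy _ ea.
exists (g1 + a *: g2); split; first exact: lin_span_comb.
have -> : x + a *: y - (g1 + a *: g2) = (x - g1) + a *: (y - g2).
  by rewrite scalerBr opprD !addrA; congr (_ + _); rewrite addrAC.
apply: le_lt_trans (nrmD hip _ _) _; rewrite nrmZ //.
rewrite ltr_pdivlMr ?ltr_wpDl ?cmod_ge0 // in h2.
have := cmod_ge0 a; have := nrm_ge0 ip (y - g2).
nra.
Qed.

Lemma W0 : W 0.
Proof. by apply: lin_span_W; exists fset0, (fun=> 0); rewrite big_seq_fset0. Qed.

Lemma W_add x y : W x -> W y -> W (x + y).
Proof. by move=> hx hy; rewrite -[y]scale1r; apply: W_comb. Qed.

Lemma W_scale a y : W y -> W (a *: y).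
Proof. by move=> hy; rewrite -[_ *: _]add0r; apply: W_comb => //; exact: W0. Qed.

Lemma W_sub x y : W x -> W y -> W (x - y).
Proof. by move=> hx hy; rewrite -scaleN1r; apply: W_comb. Qed.

Lemma W_closed h : (forall e, 0 < e -> exists g, W g /\ nrm (h - g) < e) -> W h.
Proof.
move=> hh e e0.
have e2 : 0 < e / 2 by rewrite divr_gt0.
have [g [Wg hg]] := hh _ e2; have [g' [s' hg']] := Wg _ e2.
exists g'; split => //; apply: le_lt_trans (nrm_tri hip h g g') _.
lra.
Qed.

Lemma usum_W (c : I -> R[i]) l : has_usum ip (fun j => c j *: f j) l -> W l.
Proof.
move=> h e e0; have [J0 hJ0] := h e e0.
exists (\sum_(j <- J0) c j *: f j); split; first exact: lin_span_sum.
by rewrite nrmB //; apply: hJ0.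
Qed.

Lemma fW i : W (f i).
Proof.
apply: lin_span_W; exists [fset i]%fset, (fun=> 1).
by rewrite big_seq_fset1 scale1r.
Qed.

End Spans.

Section Complete.
Variable R : realType.
Variable H : lmodType R[i].
Variable ip : H -> H -> R[i].
Hypothesis hip : is_inner_product ip.
Hypothesis hcomp : ip_complete ip.
Variable I : countType.
Local Notation nrm := (ipnorm ip).

Lemma usum_cauchy (x : I -> H) :
  (forall e, 0 < e -> exists J0 : {fset I}, forall J : {fset I}, (J0 `<=` J)%fset ->
     nrm (\sum_(i <- J) x i - \sum_(i <- J0) x i) < e) ->
  exists l, has_usum ip x l.
Proof.
move=> hc.
have hc' : forall k : nat, exists J0 : {fset I}, forall J : {fset I}, (J0 `<=` J)%fset ->
     nrm (\sum_(i <- J) x i - \sum_(i <- J0) x i) < 1 / (k.+1)%:R.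
  by move=> k; apply: hc; rewrite divr_gt0 ?ltr0n.
have [J0 hJ0] := choice hc'.
pose fix K (k : nat) : {fset I} := if k is k'.+1 then (K k' `|` J0 k)%fset else J0 0%N.
have KJ : forall k m, (k <= m)%N -> (J0 k `<=` K m)%fset.
  move=> k; elim=> [|m IH]; first by rewrite leqn0 => /eqP ->.
  rewrite leq_eqVlt => /orP[/eqP ->|]; first exact: fsubsetUr.
  by rewrite ltnS => /IH h; apply: fsubset_trans h (fsubsetUl _ _).
pose u m := \sum_(i <- K m) x i.
have uc : forall k m, (k <= m)%N -> nrm (u m - \sum_(i <- J0 k) x i) < 1 / (k.+1)%:R.
  by move=> k m km; apply: hJ0; apply: KJ.
have cau : ip_cauchy ip u.
  move=> e e0; have e2 : 0 < e / 2 by rewrite divr_gt0.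
  have [k hk] := small_inv e2.
  exists k => m n km kn.
  apply: le_lt_trans (nrm_tri hip _ (\sum_(i <- J0 k) x i) _) _.
  have := uc k m km; have := uc k n kn; rewrite (nrmB hip (\sum_(i <- J0 k) x i)).
  move: hk; set t := 1 / _ => hk; lra.
have [l hl] := hcomp cau.
exists l => e e0.
have e3 : 0 < e / 3 by rewrite divr_gt0.
have [k hk] := small_inv e3.
have [N hN] := hl _ e3.
exists (J0 k) => J hJ.
have h1 := hJ0 k J hJ.
have h2 := uc k (maxn k N) (leq_maxl _ _).
have h3 := hN (maxn k N) (leq_maxr _ _).
apply: le_lt_trans (nrm_tri hip _ (\sum_(i <- J0 k) x i) _) _.
apply: le_lt_trans (lerD (lexx _) (nrm_tri hip _ (u (maxn k N)) _)) _.
rewrite (nrmB hip (\sum_(i <- J0 k) x i)).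
move: hk h1 h2; set t := 1 / _ => hk h1 h2; lra.
Qed.

End Complete.

Local Open Scope complex_scope.

Lemma usum_nrm_le (R : realType) (H : lmodType R[i]) (ip : H -> H -> R[i])
  (hip : is_inner_product ip) (I : countType) (x : I -> H) l K :
  has_usum ip x l -> (forall J : {fset I}, ipnorm ip (\sum_(i <- J) x i) <= K) ->
  ipnorm ip l <= K.
Proof.
move=> hl hK; rewrite -subr_le0; apply: pos_small => e e0.
have [J0 hJ0] := hl e e0; have h1 := hJ0 J0 (fsubset_refl _).
have := nrmD hip (\sum_(i <- J0) x i) (l - \sum_(i <- J0) x i).
rewrite addrC subrK (nrmB hip l) => h2.
have := hK J0; lra.
Qed.

Section Inv.
Variable R : realType.
Variable H : lmodType R[i].
Variable ip : H -> H -> R[i].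
Hypothesis hip : is_inner_product ip.
Hypothesis hcomp : ip_complete ip.
Variable I : countType.
Variable f : I -> H.
Variables A B : R.
Hypothesis A0 : 0 < A.
Hypothesis B0 : 0 < B.
Hypothesis AB : A <= B.
Local Notation nrm := (ipnorm ip).
Local Notation W := (closed_span ip f).
Hypothesis FU : forall (J : {fset I}) (c : I -> R[i]),
  nrm (\sum_(j <- J) c j *: f j) ^+ 2 <= B * \sum_(j <- J) cmod (c j) ^+ 2.
Hypothesis FL : forall h, W h -> forall e, 0 < e -> exists J : {fset I},
  A * nrm h ^+ 2 - e <= \sum_(j <- J) cmod (ip h (f j)) ^+ 2.
Local Notation T := (frame_op ip f).

Lemma anal_bound h (J : {fset I}) :
  \sum_(j <- J) cmod (ip h (f j)) ^+ 2 <= B * nrm h ^+ 2.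
Proof.
set S := \sum_(j <- J) _.
set v := \sum_(j <- J) ip h (f j) *: f j.
have hv : ip h v = S%:C.
  rewrite /v (ip_sumr hip) /S -sumC_real; apply: eq_bigr => j _.
  by rewrite (ipZr hip) mulrC cmodJ2.
have S0 : 0 <= S by apply: sumr_ge0 => j _; exact: sqr_ge0.
have h1 : S <= nrm h * nrm v.
  by apply: le_trans (cauchy_schwarz hip h v); rewrite hv cmodR ger0_norm.
have h2 : nrm v ^+ 2 <= B * S := FU J (fun j => ip h (f j)).
have a0 := nrm_ge0 ip h; have b0 := nrm_ge0 ip v.
have h3 : S ^+ 2 <= nrm h ^+ 2 * (B * S).
  apply: le_trans (_ : (nrm h * nrm v) ^+ 2 <= _).
    by rewrite ler_pXn2r ?nnegrE ?mulr_ge0.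
  by rewrite exprMn ler_wpM2l // sqr_ge0.
have [->|Sp] := eqVneq S 0; first by rewrite mulr_ge0 ?sqr_ge0 // ltW.
have Sp' : 0 < S by rewrite lt_def Sp S0.
rewrite expr2 in h3.
have h4 : S <= nrm h ^+ 2 * B.
  by rewrite -(ler_pM2r Sp') -mulrA.
by rewrite mulrC.
Qed.

Lemma series_ex h : exists l, has_usum ip (fun j => ip h (f j) *: f j) l.
Proof.
apply: (usum_cauchy hip hcomp) => e e0.
have ee : 0 < e ^+ 2 / (2 * B) by rewrite divr_gt0 ?mulr_gt0 ?exprn_gt0.
have [J0 hJ0] := tail_small (fun j => sqr_ge0 (cmod (ip h (f j)))) (@anal_bound h) ee.
exists J0 => J sJ.
rewrite (sum_split _ sJ) addrC addKr.
have h1 := FU (J `\` J0)%fset (fun j => ip h (f j)).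
have h2 := hJ0 J.
set n := nrm _ in h1 *.
have n0 : 0 <= n by apply: nrm_ge0.
have h3 : n ^+ 2 <= e ^+ 2 / 2.
  apply: le_trans h1 _.
  have -> : e ^+ 2 / 2 = B * (e ^+ 2 / (2 * B)) by field; rewrite gt_eqF.
  by rewrite ler_wpM2l // ltW.
rewrite -(ltr_pXn2r (n := 2)) ?nnegrE ?(ltW e0) //.
apply: le_lt_trans h3 _.
have : 0 < e ^+ 2 by rewrite exprn_gt0.
lra.
Qed.

Lemma T_spec h : has_usum ip (fun j => ip h (f j) *: f j) (T h).
Proof. exact: frame_op_spec (series_ex h). Qed.

Lemma T_W h : W (T h).
Proof. by apply: (usum_W hip (c := fun j => ip h (f j))); exact: T_spec. Qed.

Lemma T_lin x y a : T (x + a *: y) = T x + a *: T y.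
Proof.
apply: frame_op_eq => //.
apply: usum_ext (usum_add hip (T_spec x) (usum_scale hip a (T_spec y))) => j.
by rewrite (ipDl hip) (ipZl hip) scalerDl scalerA.
Qed.

Lemma T_sub x y : T (x - y) = T x - T y.
Proof. by rewrite -[in LHS]scaleN1r T_lin scaleN1r. Qed.

Lemma T0 : T 0 = 0.
Proof. by have := T_sub 0 0; rewrite !subrr. Qed.

Definition Qf h := cRe (ip (T h) h).

Lemma Q_facts h : ip (T h) h = (Qf h)%:C /\
  (forall J : {fset I}, \sum_(j <- J) cmod (ip h (f j)) ^+ 2 <= Qf h) /\
  Qf h <= B * nrm h ^+ 2.
Proof.
have hu := usum_frame_ip hip (T_spec h).
have [hIm hle] := usumC_real (fun j => sqr_ge0 (cmod (ip h (f j)))) hu.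
split; first by rewrite /Qf; move: hIm; case: (ip (T h) h) => a b /= ->.
split => //.
by apply: usumC_le hu => J; apply: anal_bound.
Qed.

Lemma Q_lower h : W h -> A * nrm h ^+ 2 <= Qf h.
Proof.
move=> Wh; rewrite -subr_le0; apply: pos_small => e e0.
have [J hJ] := FL Wh e0; have [_ [hQ _]] := Q_facts h.
have := hQ J; lra.
Qed.

Lemma T_nrm2 h : nrm (T h) ^+ 2 <= B * Qf h.
Proof.
have [_ [hQ _]] := Q_facts h.
have Q0 : 0 <= Qf h by apply: le_trans (hQ fset0) ; rewrite big_seq_fset0.
have : nrm (T h) <= Num.sqrt (B * Qf h).
  apply: (usum_nrm_le hip (T_spec h)) => J.
  set v := nrm _; have -> : v = Num.sqrt (v ^+ 2) by rewrite sqrtr_sqr ger0_norm // nrm_ge0.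
  apply: ler_wsqrtr; apply: le_trans (FU J _) _.
  by rewrite ler_wpM2l ?(ltW B0).
move=> h1; rewrite -(sqr_sqrtr (a := B * Qf h)) ?mulr_ge0 ?(ltW B0) //.
by rewrite ler_pXn2r ?nnegrE ?nrm_ge0 ?sqrtr_ge0.
Qed.

Lemma T_bound h : nrm (T h) <= B * nrm h.
Proof.
have [_ [_ hQ]] := Q_facts h.
have h1 := T_nrm2 h.
have h2 : nrm (T h) ^+ 2 <= (B * nrm h) ^+ 2.
  apply: le_trans h1 _; rewrite exprMn expr2 -mulrA ler_wpM2l ?(ltW B0) //.
by rewrite -(ler_pXn2r (n := 2)) ?nnegrE ?nrm_ge0 ?mulr_ge0 ?nrm_ge0 ?(ltW B0).
Qed.

Lemma contraction e : W e ->
  nrm (e - (B^-1)%:C *: T e) ^+ 2 <= (1 - A / B) * nrm e ^+ 2.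
Proof.
move=> We.
have [hQ _] := Q_facts e.
have hl := Q_lower We; have hN := T_nrm2 e.
set t := B^-1.
have t0 : 0 < t by rewrite invr_gt0.
have tB : t * B = 1 by rewrite mulVf // gt_eqF.
rewrite (nrm2 hip) (ipBl hip) !(ipBr hip) !(ipZl hip) !(ipZr hip) conjcR.
rewrite (ipC hip e (T e)) hQ conjcR (ip_nrm hip e) (ip_nrm hip (T e)).
rewrite !ReB !ReRM !ReR.
set Q := Qf e in hl hN *; set N := nrm (T e) ^+ 2 in hN *; set E := nrm e ^+ 2 in hl *.
have h1 : t * (t * N) <= t * Q.
  rewrite ler_pM2l //; apply: le_trans (_ : t * (B * Q) <= _).
    by rewrite ler_pM2l.
  by rewrite mulrA tB mul1r.
have h2 : t * (A * E) <= t * Q by rewrite ler_pM2l.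
rewrite mulrBl mul1r.
have -> : A * t * E = t * (A * E) by ring.
lra.
Qed.

Theorem frame_inverse y : W y ->
  exists g, W g /\ has_usum ip (fun j => ip g (f j) *: f j) y.
Proof.
move=> Wy.
set t := B^-1.
have t0 : 0 < t by rewrite invr_gt0.
pose fix xs (k : nat) : H := if k is k'.+1 then xs k' + t%:C *: (y - T (xs k')) else 0.
pose es k := y - T (xs k).
have Wxs : forall k, W (xs k).
  elim=> [|k IH] /=; first exact: W0.
  by apply: W_comb => //; apply: W_sub => //; exact: T_W.
have Wes : forall k, W (es k) by move=> k; apply: W_sub => //; exact: T_W.
have es_step : forall k, es k.+1 = es k - t%:C *: T (es k).
  by move=> k; rewrite /es /= T_lin opprD addrA.
set q := 1 - A / B.
have q0 : 0 <= q by rewrite subr_ge0 ler_pdivrMr // mul1r.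
have q1 : q < 1 by rewrite /q ltrBlDr ltrDl divr_gt0.
set s := Num.sqrt q.
have s0 : 0 <= s := sqrtr_ge0 _.
have s2 : s ^+ 2 = q by rewrite sqr_sqrtr.
have s1 : s < 1.
  by rewrite -(ltr_pXn2r (n := 2)) ?nnegrE // s2 expr1n.
set ny := nrm y.
have ny0 : 0 <= ny := nrm_ge0 _ _.
have es_bound : forall k, nrm (es k) <= s ^+ k * ny.
  elim=> [|k IH]; first by rewrite /es /= T0 subr0 expr0 mul1r.
  have h1 := contraction (Wes k); rewrite -es_step -/q -s2 -exprMn in h1.
  have h2 : nrm (es k.+1) <= s * nrm (es k).
    by rewrite -(ler_pXn2r (n := 2)) ?nnegrE ?nrm_ge0 ?mulr_ge0 ?nrm_ge0.
  apply: le_trans h2 _; rewrite exprS -mulrA ler_wpM2l //.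
have dx : forall k, nrm (xs k.+1 - xs k) <= t * (s ^+ k * ny).
  move=> k; rewrite /= addrAC subrr add0r nrmZ // cmodR ger0_norm ?(ltW t0) //.
  by rewrite ler_wpM2l ?(ltW t0) //; apply: es_bound.
set C := t * ny / (1 - s).
have s1' : 0 < 1 - s by rewrite subr_gt0.
have hC : C * (1 - s) = t * ny by rewrite /C divfK // gt_eqF.
have C0 : 0 <= C by rewrite /C divr_ge0 ?mulr_ge0 ?(ltW t0) // ltW.
have cb : forall n j, nrm (xs (n + j)%N - xs n) <= C * (s ^+ n - s ^+ (n + j)).
  move=> n; elim=> [|j IH]; first by rewrite addn0 subrr nrm0 // subrr mulr0.
  rewrite addnS.
  have := nrmD hip (xs (n + j).+1 - xs (n + j)) (xs (n + j) - xs n).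
  rewrite addrA subrK => h1.
  apply: le_trans h1 _.
  have := dx (n + j)%N; set P := s ^+ (n + j) => h2.
  rewrite exprS.
  have e1 : C * P - C * (s * P) = t * (P * ny).
    transitivity (C * (1 - s) * P); first by ring.
    by rewrite hC; ring.
  move: IH; rewrite -/P mulrBr => IH; rewrite mulrBr.
  lra.
have cb2 : forall N m, (N <= m)%N -> nrm (xs m - xs N) <= C * s ^+ N.
  move=> N m hm; rewrite -(subnKC hm); apply: le_trans (cb N (m - N)%N) _.
  by rewrite ler_wpM2l // gerBl exprn_ge0.
have cau : ip_cauchy ip xs.
  move=> e e0.
  have ee : 0 < e / (2 * C + 1) by rewrite divr_gt0 //; lra.
  have [N hN] := geo_small (s := s) (ltac:(by rewrite s0 s1)) ee.
  exists N => m n hm hn.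
  have h1 := cb2 N m hm; have h2 := cb2 N n hn.
  have h3 := hN N (leqnn N).
  rewrite ltr_pdivlMr ?ltr_wpDl // in h3; last by lra.
  apply: le_lt_trans (nrm_tri hip _ (xs N) _) _.
  rewrite (nrmB hip (xs N)).
  have : 0 <= s ^+ N by apply: exprn_ge0.
  nra.
have [x hx] := hcomp cau.
exists x; split.
  apply: (W_closed hip) => e e0; have [N hN] := hx e e0.
  exists (xs N); split => //; rewrite (nrmB hip); exact: hN (leqnn N).
have Tx : T x = y.
  apply/eqP; rewrite -subr_eq0; apply/eqP; apply: (nrm_small_eq0 hip) => e e0.
  have e2 : 0 < e / 2 by rewrite divr_gt0.
  have eb : 0 < e / 2 / (B + 1) by rewrite divr_gt0 // ltr_wpDl // ltW.
  have ey : 0 < e / 2 / (ny + 1) by rewrite divr_gt0 // ltr_wpDl.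
  have [N1 hN1] := geo_small (s := s) (ltac:(by rewrite s0 s1)) ey.
  have [N2 hN2] := hx _ eb.
  set k := maxn N1 N2.
  have h1 := hN1 k (leq_maxl _ _); have h2 := hN2 k (leq_maxr _ _).
  have h3 := es_bound k; have h4 := T_bound (xs k - x).
  rewrite T_sub in h4.
  have h5 := nrm_tri hip (T x) (T (xs k)) y.
  rewrite (nrmB hip (T x) (T (xs k))) (nrmB hip (T (xs k)) y) in h5.
  have : nrm (y - T (xs k)) = nrm (es k) by [].
  rewrite ltr_pdivlMr ?ltr_wpDl // in h1.
  rewrite ltr_pdivlMr ?ltr_wpDl // ?ltW // in h2.
  have := nrm_ge0 ip (xs k - x); have := exprn_ge0 k s0.
  nra.
by rewrite -Tx; apply: T_spec.
Qed.

End Inv.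

Local Open Scope complex_scope.

Lemma amgm (R : realType) (a b B : R) : 0 < B -> a * b <= (B * a ^+ 2 + b ^+ 2 / B) / 2.
Proof.
move=> B0; rewrite -subr_ge0.
have -> : (B * a ^+ 2 + b ^+ 2 / B) / 2 - a * b = (B * a - b) ^+ 2 / (2 * B).
  by field; rewrite gt_eqF.
by rewrite divr_ge0 ?sqr_ge0 // mulr_ge0 // ltW.
Qed.

Section EsumFin.
Variable R : realType.
Variable I : countType.

Lemma esum_fin (r : I -> R) (J : {fset I}) : (forall i, 0 <= r i) ->
  ((\sum_(j <- J) r j)%:E <= \esum_(i in [set: I]) (r i)%:E)%E.
Proof.
move=> r0; apply: esum_ge; exists [set` J]; first by split => //; exact: finite_fset.
by rewrite -(fsbig_seq _ _ (fset_uniq J)) sumEFin.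
Qed.

Lemma esum_lt (r : I -> R) x : (forall i, 0 <= r i) ->
  (x%:E < \esum_(i in [set: I]) (r i)%:E)%E -> exists J : {fset I}, x < \sum_(j <- J) r j.
Proof.
move=> r0 /ereal_sup_gt [y [X [fX _] <-] hy].
have [J eJ] := finite_fsetP.1 fX; exists J.
by move: hy; rewrite eJ -(fsbig_seq _ _ (fset_uniq J)) sumEFin lte_fin.
Qed.

End EsumFin.

Section FrameFin.
Variable R : realType.
Variable H : lmodType R[i].
Variable ip : H -> H -> R[i].
Hypothesis hip : is_inner_product ip.
Variable I : countType.
Variable f : I -> H.
Local Notation nrm := (ipnorm ip).
Local Notation W := (closed_span ip f).

Lemma frame_fin : is_frame ip f -> exists A B : R, [/\ 0 < A, 0 < B, A <= B,
  (forall (J : {fset I}) (c : I -> R[i]),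
    nrm (\sum_(j <- J) c j *: f j) ^+ 2 <= B * \sum_(j <- J) cmod (c j) ^+ 2) &
  (forall h, W h -> forall e, 0 < e -> exists J : {fset I},
    A * nrm h ^+ 2 - e <= \sum_(j <- J) cmod (ip h (f j)) ^+ 2)].
Proof.
move=> [A [B [A0 B0 hAB]]].
exists (Num.min A B), B; split => //.
- by rewrite lt_min A0 B0.
- by rewrite ge_min lexx orbT.
- move=> J c.
  set v := \sum_(j <- J) c j *: f j.
  have Wv : W v by apply: (lin_span_W hip); exists J, c.
  have [_ hup] := hAB v Wv.
  set Sd := \sum_(j <- J) cmod (ip v (f j)) ^+ 2.
  have hSd : Sd <= B * nrm v ^+ 2.
    rewrite -lee_fin; apply: le_trans hup.
    by apply: esum_fin => j; exact: sqr_ge0.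
  set Sc := \sum_(j <- J) cmod (c j) ^+ 2.
  have h1 : nrm v ^+ 2 <= \sum_(j <- J) cmod (c j) * cmod (ip v (f j)).
    rewrite (nrm2 hip) {2}/v (ip_sumr hip) Re_sum; apply: ler_sum => j _.
    rewrite (ipZr hip); apply: le_trans (Re_le_cmod _) _.
    by rewrite cmodM cmodJ.
  have h2 : \sum_(j <- J) cmod (c j) * cmod (ip v (f j)) <= (B * Sc + Sd / B) / 2.
    apply: le_trans (_ : \sum_(j <- J) ((B * cmod (c j) ^+ 2 + cmod (ip v (f j)) ^+ 2 / B) / 2) <= _).
      by apply: ler_sum => j _; apply: amgm.
    rewrite -mulr_suml big_split /= -mulr_sumr -mulr_suml.
    by rewrite -/Sc -/Sd.
  have h3 : Sd / B <= nrm v ^+ 2 by rewrite ler_pdivrMr // mulrC.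
  lra.
- move=> h Wh e e0.
  have [hlo _] := hAB h Wh.
  have hlt : ((A * nrm h ^+ 2 - e)%:E < \esum_(i in [set: I]) (cmod (ip h (f i)) ^+ 2)%:E)%E.
    by apply: lt_le_trans hlo; rewrite lte_fin ltrBlDr ltrDl.
  have [J hJ] := esum_lt (fun i => sqr_ge0 _) hlt.
  exists J; apply: le_trans (ltW hJ); rewrite lerD2r ler_wpM2r ?sqr_ge0 //.
  by rewrite ge_min lexx.
Qed.

End FrameFin.

Local Open Scope complex_scope.

Section Part3.
Variable R : realType.
Variable H : lmodType R[i].
Variable ip : H -> H -> R[i].
Hypothesis hs : separable_hilbert ip.
Variable I : countType.
Variable f : I -> H.
Hypothesis hf : is_frame ip f.
Hypothesis hr : is_riesz_basis_of_span ip f.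
Local Notation nrm := (ipnorm ip).
Local Notation W := (closed_span ip f).

Let hip : is_inner_product ip. Proof. by move: hs => -[]. Qed.
Let hcomp : ip_complete ip. Proof. by move: hs => -[]. Qed.

Lemma usum_delta i : has_usum ip (fun j => (if j == i then 1 else 0) *: f j) (f i).
Proof.
move=> e e0; exists [fset i]%fset => J sJ.
have iJ : i \in J by apply: (fsubsetP sJ); rewrite inE.
rewrite (big_fsetD1 i iJ) /= eqxx scale1r big1_fset ?addr0 ?subrr ?nrm0 //.
by move=> j; rewrite !inE => /andP[/negbTE -> _] _; rewrite scale0r.
Qed.

Lemma riesz_dual i : ip (f i) (canonical_dual ip f i) = 1.
Proof.
have [A [B [A0 B0 AB FU FL]]] := frame_fin hip hf.
have [g [Wg hg]] := frame_inverse hip hcomp A0 B0 AB FU FL (fW hip f i).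
have exP : exists g, W g /\ frame_op ip f g = f i.
  by exists g; split => //; apply: (frame_op_eq hip hg).
rewrite /canonical_dual; have [Wcd hcd] := xgetPex 0 exP.
set cd := xget _ _ in Wcd hcd *.
have hu : has_usum ip (fun j => ip cd (f j) *: f j) (f i).
  have := T_spec hip hcomp B0 FU cd. rewrite hcd. done.
pose d j := ip cd (f j) - (if j == i then 1 else 0).
have hd : has_usum ip (fun j => d j *: f j) 0.
  have := usum_add hip hu (usum_opp hip (usum_delta i)); rewrite subrr.
  by apply: usum_ext => j; rewrite /d scalerBl.
have [A' [B' [A'0 B'0 hR]]] := hr.
have di : cmod (d i) ^+ 2 <= 0.
  apply: pos_small => e e0.
  have ee : 0 < Num.sqrt (A' * e) by rewrite sqrtr_gt0 mulr_gt0.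
  have [J0 hJ0] := hd _ ee.
  set J := (J0 `|` [fset i])%fset.
  have h1 := hJ0 J (fsubsetUl _ _); rewrite subr0 in h1.
  have [h2 _] := andP (hR J d).
  have h3 : cmod (d i) ^+ 2 <= \sum_(j <- J) cmod (d j) ^+ 2.
    have := sum_mono (fun j => sqr_ge0 (cmod (d j))) (fsubsetUr J0 [fset i]%fset).
    by rewrite big_seq_fset1.
  have h4 : nrm (\sum_(j <- J) d j *: f j) ^+ 2 < A' * e.
    rewrite -(sqr_sqrtr (a := A' * e)) ?mulr_ge0 ?ltW //.
    by rewrite ltr_pXn2r ?nnegrE ?nrm_ge0 ?sqrtr_ge0.
  have h5 : A' * cmod (d i) ^+ 2 < A' * e.
    apply: le_lt_trans h4; apply: le_trans h2; by rewrite ler_wpM2l // ltW.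
  by rewrite ltr_pM2l // in h5; apply: ltW.
have : d i = 0.
  apply: cmod_eq0; have := cmod_ge0 (d i).
  move: di; set x := cmod (d i) => di x0.
  apply/eqP; rewrite eq_le x0 andbT; nra.
rewrite /d eqxx => /eqP; rewrite subr_eq0 => /eqP h.
by rewrite (ipC hip) h conjc1.
Qed.

End Part3.

Local Open Scope complex_scope.

Section Pairs.
Variable R : realType.
Variables H1 H2 : lmodType R[i].
Variable ip1 : H1 -> H1 -> R[i].
Variable ip2 : H2 -> H2 -> R[i].
Hypothesis hip1 : is_inner_product ip1.
Hypothesis hip2 : is_inner_product ip2.
Local Notation ipp := (ip_dsum ip1 ip2).
Local Notation nm1 := (ipnorm ip1).
Local Notation nm2 := (ipnorm ip2).
Local Notation nmp := (ipnorm ipp).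

Lemma ipp_inner : is_inner_product ipp.
Proof.
split.
- move=> a x y z; rewrite /ip_dsum /= (ipDZl hip1) (ipDZl hip2); ring.
- by move=> x y; rewrite /ip_dsum conjcD -(ipC hip1) -(ipC hip2).
- by move=> x; rewrite /ip_dsum addr_ge0 // ip_ge0.
- case=> x1 x2; rewrite /ip_dsum /= => /eqP.
  rewrite paddr_eq0 ?ip_ge0 // => /andP[/eqP h1 /eqP h2].
  by rewrite (ip_eq0 hip1 h1) (ip_eq0 hip2 h2).
Qed.

Lemma nrmp2 (x : H1 * H2) : nmp x ^+ 2 = nm1 x.1 ^+ 2 + nm2 x.2 ^+ 2.
Proof. by rewrite (nrm2 ipp_inner) /ip_dsum ReD -(nrm2 hip1) -(nrm2 hip2). Qed.

Lemma nrmp_fst (x : H1 * H2) : nm1 x.1 <= nmp x.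
Proof.
rewrite -(ler_pXn2r (n := 2)) ?nnegrE ?nrm_ge0 // nrmp2 lerDl sqr_ge0 //.
Qed.

Lemma nrmp_snd (x : H1 * H2) : nm2 x.2 <= nmp x.
Proof.
rewrite -(ler_pXn2r (n := 2)) ?nnegrE ?nrm_ge0 // nrmp2 lerDr sqr_ge0 //.
Qed.

Lemma nrmp_le (x : H1 * H2) : nmp x <= nm1 x.1 + nm2 x.2.
Proof.
rewrite -(ler_pXn2r (n := 2)) ?nnegrE ?nrm_ge0 ?addr_ge0 ?nrm_ge0 // nrmp2 sqrrD.
have := nrm_ge0 ip1 x.1; have := nrm_ge0 ip2 x.2; nra.
Qed.

Lemma pair_sum (T : Type) (r : seq T) (F : T -> H1 * H2) :
  \sum_(j <- r) F j = (\sum_(j <- r) (F j).1, \sum_(j <- r) (F j).2).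
Proof.
elim: r => [|x r IH]; first by rewrite !big_nil.
by rewrite !big_cons IH.
Qed.

Lemma completep : ip_complete ip1 -> ip_complete ip2 -> ip_complete ipp.
Proof.
move=> c1 c2 u hu.
have hu1 : ip_cauchy ip1 (fun n => (u n).1).
  move=> e e0; have [N hN] := hu e e0; exists N => m n hm hn.
  by apply: le_lt_trans (hN m n hm hn); apply: (nrmp_fst (u m - u n)).
have hu2 : ip_cauchy ip2 (fun n => (u n).2).
  move=> e e0; have [N hN] := hu e e0; exists N => m n hm hn.
  by apply: le_lt_trans (hN m n hm hn); apply: (nrmp_snd (u m - u n)).
have [l1 hl1] := c1 _ hu1; have [l2 hl2] := c2 _ hu2.
exists (l1, l2) => e e0.
have e2 : 0 < e / 2 by rewrite divr_gt0.
have [N1 hN1] := hl1 _ e2; have [N2 hN2] := hl2 _ e2.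
exists (maxn N1 N2) => n hn.
have h1 := hN1 n (leq_trans (leq_maxl _ _) hn).
have h2 := hN2 n (leq_trans (leq_maxr _ _) hn).
apply: le_lt_trans (nrmp_le _) _; rewrite /=; lra.
Qed.

Lemma usum_fst (I : countType) (x : I -> H1 * H2) l : has_usum ipp x l ->
  has_usum ip1 (fun j => (x j).1) l.1.
Proof.
move=> h e e0; have [J0 hJ0] := h e e0; exists J0 => J /hJ0 hJ.
apply: le_lt_trans hJ; apply: le_trans (nrmp_fst _); by rewrite pair_sum.
Qed.

Lemma usum_snd (I : countType) (x : I -> H1 * H2) l : has_usum ipp x l ->
  has_usum ip2 (fun j => (x j).2) l.2.
Proof.
move=> h e e0; have [J0 hJ0] := h e e0; exists J0 => J /hJ0 hJ.
apply: le_lt_trans hJ; apply: le_trans (nrmp_snd _); by rewrite pair_sum.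
Qed.

Variable I : countType.
Variable f1 : I -> H1.
Variable f2 : I -> H2.
Local Notation F := (fun j => (f1 j, f2 j)).

Lemma Wp_fst g : closed_span ipp F g -> closed_span ip1 f1 g.1.
Proof.
move=> hg e e0; have [g' [[J [c ->]] h]] := hg e e0.
exists (\sum_(j <- J) c j *: f1 j); split; first by exists J, c.
apply: le_lt_trans h; apply: le_trans (nrmp_fst _); by rewrite pair_sum.
Qed.

Lemma Wp_snd g : closed_span ipp F g -> closed_span ip2 f2 g.2.
Proof.
move=> hg e e0; have [g' [[J [c ->]] h]] := hg e e0.
exists (\sum_(j <- J) c j *: f2 j); split; first by exists J, c.
apply: le_lt_trans h; apply: le_trans (nrmp_snd _); by rewrite pair_sum.
Qed.

End Pairs.

Local Open Scope complex_scope.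

Lemma cmodD2 (R : realType) (a b : R[i]) :
  cmod (a + b) ^+ 2 = cmod a ^+ 2 + cmod b ^+ 2 + 2 * cRe (a * conjc b).
Proof.
rewrite !cmod2; case: a => a1 a2; case: b => b1 b2 /=.
rewrite !expr2; ring.
Qed.

Section CdSpec.
Variable R : realType.
Variable H : lmodType R[i].
Variable ip : H -> H -> R[i].
Hypothesis hip : is_inner_product ip.
Hypothesis hcomp : ip_complete ip.
Variable I : countType.
Variable f : I -> H.
Variables A B : R.
Hypothesis A0 : 0 < A.
Hypothesis B0 : 0 < B.
Hypothesis AB : A <= B.
Local Notation nrm := (ipnorm ip).
Local Notation W := (closed_span ip f).
Hypothesis FU : forall (J : {fset I}) (c : I -> R[i]),
  nrm (\sum_(j <- J) c j *: f j) ^+ 2 <= B * \sum_(j <- J) cmod (c j) ^+ 2.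
Hypothesis FL : forall h, W h -> forall e, 0 < e -> exists J : {fset I},
  A * nrm h ^+ 2 - e <= \sum_(j <- J) cmod (ip h (f j)) ^+ 2.

Lemma cd_spec i : W (canonical_dual ip f i) /\
  has_usum ip (fun j => ip (canonical_dual ip f i) (f j) *: f j) (f i).
Proof.
have [g [Wg hg]] := frame_inverse hip hcomp A0 B0 AB FU FL (fW hip f i).
have exP : exists g, W g /\ frame_op ip f g = f i.
  by exists g; split => //; apply: (frame_op_eq hip hg).
rewrite /canonical_dual; have [Wcd hcd] := xgetPex 0 exP.
set cd := xget _ _ in Wcd hcd *.
split => //.
have := T_spec hip hcomp B0 FU cd. by rewrite hcd.
Qed.

End CdSpec.

Lemma transfer (R : realType) (H : lmodType R[i]) (ip : H -> H -> R[i])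
  (hip : is_inner_product ip) (I : countType) (f : I -> H) i cd G (u : I -> R[i]) :
  has_usum ip (fun j => ip cd (f j) *: f j) (f i) ->
  has_usum ip (fun j => u j *: f j) (f i) ->
  has_usumC (fun j => (u j - ip G (f j)) * ip (f j) cd) 0 ->
  ip (f i) G = ip (f i) cd.
Proof.
move=> hcd hu hx.
have h2 := usum_ipl hip cd hu.
have h4 := usumC_sub h2 hx; rewrite subr0 in h4.
have h4' : has_usumC (fun j => ip G (f j) * ip (f j) cd) (ip (f i) cd).
  by apply: usumC_ext h4 => j; rewrite (ipZl hip); ring.
have h6 := usumC_conj h4'.
have h5 := usum_ipl hip G hcd.
have e : ip (f i) G = conjc (ip (f i) cd).
  apply: (usumC_uniq h5); apply: usumC_ext h6 => j.
  by rewrite (ipZl hip) conjcM -!(ipC hip) mulrC.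
have [hr _] := dual_val hip hcd.
by rewrite e hr conjcR -hr.
Qed.

Local Open Scope complex_scope.

Section Part4.
Variable R : realType.
Variables H1 H2 : lmodType R[i].
Variable ip1 : H1 -> H1 -> R[i].
Variable ip2 : H2 -> H2 -> R[i].
Hypothesis hip1 : is_inner_product ip1.
Hypothesis hip2 : is_inner_product ip2.
Local Notation ipp := (ip_dsum ip1 ip2).
Local Notation nm1 := (ipnorm ip1).
Local Notation nm2 := (ipnorm ip2).
Local Notation nmp := (ipnorm ipp).
Variable I : countType.
Variable f1 : I -> H1.
Variable f2 : I -> H2.
Local Notation F := (fun j => (f1 j, f2 j)).
Hypothesis hort : ortho_supersets ip1 ip2 f1 f2.

Lemma FU_pair B1 B2 :
  (forall (J : {fset I}) (c : I -> R[i]),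
    nm1 (\sum_(j <- J) c j *: f1 j) ^+ 2 <= B1 * \sum_(j <- J) cmod (c j) ^+ 2) ->
  (forall (J : {fset I}) (c : I -> R[i]),
    nm2 (\sum_(j <- J) c j *: f2 j) ^+ 2 <= B2 * \sum_(j <- J) cmod (c j) ^+ 2) ->
  (forall (J : {fset I}) (c : I -> R[i]),
    nmp (\sum_(j <- J) c j *: F j) ^+ 2 <= (B1 + B2) * \sum_(j <- J) cmod (c j) ^+ 2).
Proof.
move=> h1 h2 J c; rewrite (nrmp2 hip1 hip2) pair_sum /= mulrDl.
exact: lerD (h1 J c) (h2 J c).
Qed.

Lemma FL_pair A1 A2 :
  (forall h, closed_span ip1 f1 h -> forall e, 0 < e -> exists J : {fset I},
    A1 * nm1 h ^+ 2 - e <= \sum_(j <- J) cmod (ip1 h (f1 j)) ^+ 2) ->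
  (forall h, closed_span ip2 f2 h -> forall e, 0 < e -> exists J : {fset I},
    A2 * nm2 h ^+ 2 - e <= \sum_(j <- J) cmod (ip2 h (f2 j)) ^+ 2) ->
  0 < A1 -> 0 < A2 ->
  (forall h, closed_span ipp F h -> forall e, 0 < e -> exists J : {fset I},
    Num.min A1 A2 * nmp h ^+ 2 - e <= \sum_(j <- J) cmod (ipp h (F j)) ^+ 2).
Proof.
move=> hl1 hl2 A10 A20 h Wh e e0.
have W1 := Wp_fst hip1 hip2 Wh; have W2 := Wp_snd hip1 hip2 Wh.
have e4 : 0 < e / 4 by rewrite divr_gt0.
have [J1 hJ1] := hl1 _ W1 _ e4; have [J2 hJ2] := hl2 _ W2 _ e4.
have [J3 hJ3] := hort W1 W2 e4.
set J := (J1 `|` J2 `|` J3)%fset.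
have s1 : (J1 `<=` J)%fset by apply: fsubset_trans (fsubsetUl J1 J2) (fsubsetUl _ J3).
have s2 : (J2 `<=` J)%fset by apply: fsubset_trans (fsubsetUr J1 J2) (fsubsetUl _ J3).
have s3 : (J3 `<=` J)%fset by apply: fsubsetUr.
exists J.
rewrite /ip_dsum /=.
under eq_bigr do rewrite cmodD2 -(ipC hip2).
rewrite !big_split /= -mulr_sumr -Re_sum.
have h3 := hJ3 J s3; rewrite subr0 in h3.
have h3' := le_trans (absRe_le_cmod _) (ltW h3).
have h3'' : - (e / 4) <= cRe (\sum_(j <- J) ip1 h.1 (f1 j) * ip2 (f2 j) h.2).
  by move: h3'; rewrite ler_norml => /andP[].
have m1 := sum_mono (fun j => sqr_ge0 (cmod (ip1 h.1 (f1 j)))) s1.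
have m2 := sum_mono (fun j => sqr_ge0 (cmod (ip2 h.2 (f2 j)))) s2.
rewrite (nrmp2 hip1 hip2).
have n1 := sqr_ge0 (nm1 h.1); have n2 := sqr_ge0 (nm2 h.2).
have mA1 : Num.min A1 A2 <= A1 by rewrite ge_min lexx.
have mA2 : Num.min A1 A2 <= A2 by rewrite ge_min lexx orbT.
have q1 : Num.min A1 A2 * nm1 h.1 ^+ 2 <= A1 * nm1 h.1 ^+ 2 by rewrite ler_wpM2r.
have q2 : Num.min A1 A2 * nm2 h.2 ^+ 2 <= A2 * nm2 h.2 ^+ 2 by rewrite ler_wpM2r.
rewrite mulrDr.
lra.
Qed.

End Part4.

Local Open Scope complex_scope.

Lemma weaken_FL (R : realType) (H : lmodType R[i]) (ip : H -> H -> R[i]) (I : countType)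
  (f : I -> H) A A' : A' <= A ->
  (forall h, closed_span ip f h -> forall e, 0 < e -> exists J : {fset I},
    A * ipnorm ip h ^+ 2 - e <= \sum_(j <- J) cmod (ip h (f j)) ^+ 2) ->
  (forall h, closed_span ip f h -> forall e, 0 < e -> exists J : {fset I},
    A' * ipnorm ip h ^+ 2 - e <= \sum_(j <- J) cmod (ip h (f j)) ^+ 2).
Proof.
move=> hA hl h Wh e e0; have [J hJ] := hl h Wh e e0; exists J.
by apply: le_trans hJ; rewrite lerD2r ler_wpM2r ?sqr_ge0.
Qed.

Section Final.
Variable R : realType.
Variable I : countType.
Variable In : nat -> {fset I}.

Lemma part4 (H1 H2 : lmodType R[i]) (ip1 : H1 -> H1 -> R[i]) (ip2 : H2 -> H2 -> R[i])
  (f1 : I -> H1) (f2 : I -> H2) :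
  separable_hilbert ip1 -> separable_hilbert ip2 ->
  is_frame ip1 f1 -> is_frame ip2 f2 ->
  ortho_supersets ip1 ip2 f1 f2 ->
  frame_measure In (ip_dsum ip1 ip2) (fun i => (f1 i, f2 i))
    = frame_measure In ip1 f1 \+ frame_measure In ip2 f2.
Proof.
move=> [hip1 hc1 _] [hip2 hc2 _] hf1 hf2 hort.
have [A1 [B1 [A10 B10 AB1 FU1 FL1]]] := frame_fin hip1 hf1.
have [A2 [B2 [A20 B20 AB2 FU2 FL2]]] := frame_fin hip2 hf2.
have hipp := ipp_inner hip1 hip2.
have hcp := completep hip1 hip2 hc1 hc2.
have FUp := FU_pair hip1 hip2 FU1 FU2.
have FLp := FL_pair hip1 hip2 hort FL1 FL2 A10 A20.
set Ap := Num.min (Num.min A1 A2) (B1 + B2).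
have Ap0 : 0 < Ap by rewrite !lt_min A10 A20 addr_gt0.
have Bp0 : 0 < B1 + B2 by rewrite addr_gt0.
have ApB : Ap <= B1 + B2 by rewrite ge_min lexx orbT.
have hApm : Ap <= Num.min A1 A2 by rewrite ge_min lexx.
have FLp' := weaken_FL hApm FLp.
have key : forall i, ip_dsum ip1 ip2 (f1 i, f2 i) (canonical_dual (ip_dsum ip1 ip2) (fun i => (f1 i, f2 i)) i)
   = ip1 (f1 i) (canonical_dual ip1 f1 i) + ip2 (f2 i) (canonical_dual ip2 f2 i).
  move=> i.
  have [WG hG] := cd_spec hipp hcp Ap0 Bp0 ApB FUp FLp' i.
  set G := canonical_dual _ _ i in WG hG *.
  have [W1 hcd1] := cd_spec hip1 hc1 A10 B10 AB1 FU1 FL1 i.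
  have [W2 hcd2] := cd_spec hip2 hc2 A20 B20 AB2 FU2 FL2 i.
  set cd1 := canonical_dual ip1 f1 i in W1 hcd1 *.
  set cd2 := canonical_dual ip2 f2 i in W2 hcd2 *.
  have WG1 := Wp_fst hip1 hip2 WG; have WG2 := Wp_snd hip1 hip2 WG.
  have hu1 := usum_fst hip1 hip2 hG; have hu2 := usum_snd hip1 hip2 hG.
  rewrite /= in hu1 hu2.
  rewrite /ip_dsum /=; congr (_ + _).
    apply: (transfer hip1 hcd1 hu1).
    have := usumC_conj (hort _ _ W1 WG2); rewrite conjc0.
    apply: usumC_ext => j; rewrite /ip_dsum /= conjcM -!(ipC hip1) -(ipC hip2).
    by rewrite addrC addKr mulrC.
  apply: (transfer hip2 hcd2 hu2).
  have := hort _ _ WG1 W2.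
  by apply: usumC_ext => j; rewrite /ip_dsum /= addrK.
apply: funext => p; have hp := Nstar_fu p.
rewrite /frame_measure /=.
have -> : frame_aseq In (ip_dsum ip1 ip2) (fun i => (f1 i, f2 i)) =
   (fun n => frame_aseq In ip1 f1 n + frame_aseq In ip2 f2 n).
  apply: funext => n; rewrite /frame_aseq /frame_bseq.
  under eq_bigr do rewrite key.
  by rewrite big_split ReD mulrDl.
have := plim_add hp (aseq_bound In f1 hip1) (aseq_bound In f2 hip2). by [].
Qed.


Lemma sum_ones (s : seq I) : \sum_(i <- s) (1 : R) = (size s)%:R.
Proof.
elim: s => [|x s IH]; first by rewrite big_nil.
by rewrite big_cons IH /= -nat1r.
Qed.

Lemma part3 (I_nonempty : [set: I] !=set0)
  (In_nested : forall n : nat, (In n `<=` In n.+1)%fset)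
  (In_cover : forall i : I, exists n : nat, i \in In n)
  (H : lmodType R[i]) (ip : H -> H -> R[i]) (f : I -> H) :
  separable_hilbert ip -> is_frame ip f -> is_riesz_basis_of_span ip f ->
  frame_measure In ip f = (fun _ => 1).
Proof.
move=> hs hf hr.
have [i0 _] := I_nonempty; have [N hN] := In_cover i0.
have sub : forall k, i0 \in In (N + k)%N.
  elim=> [|k IH]; first by rewrite addn0.
  by rewrite addnS; apply: (fsubsetP (In_nested _)).
apply: funext => p; have hp := Nstar_fu p.
rewrite /frame_measure; apply: (plim_eq hp) => e e0.
apply: (fu_cofin hp (N := N)) => n hn /=.
have -> : frame_aseq In ip f n = 1.
  rewrite /frame_aseq /frame_bseq.
  under eq_bigr do rewrite (riesz_dual hs hf hr).
  rewrite Re_sum /= sum_ones.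
  have : i0 \in In n by rewrite -(subnKC hn); apply: sub.
  move=> iin; rewrite divff //.
  have : (0 < #|` In n|)%N by rewrite cardfs_gt0; apply/fset0Pn; exists i0.
  by rewrite -(ltr0n R) => /gt_eqF ->.
by rewrite subrr normr0.
Qed.

End Final.

Unset Implicit Arguments.
Local Open Scope ring_scope.

Theorem theorem4p2 (R : realType) (I : countType) (In : nat -> {fset I})
  (I_nonempty : [set: I] !=set0)
  (In_nested : forall n : nat, (In n `<=` In n.+1)%fset)
  (In_cover : forall i : I, exists n : nat, i \in In n) :
  (* (1) *)
  (forall (H1 H2 : lmodType R[i]) (ip1 : H1 -> H1 -> R[i]) (ip2 : H2 -> H2 -> R[i])
          (f1 : I -> H1) (f2 : I -> H2),
      separable_hilbert ip1 -> separable_hilbert ip2 ->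
      is_frame ip1 f1 -> is_frame ip2 f2 ->
      (frame_measure In ip1 f1 = frame_measure In ip2 f2
        <-> seq_approx In (frame_bseq In ip1 f1) (frame_bseq In ip2 f2)))
  (* (2) *)
  /\ (forall (H1 H2 : lmodType R[i]) (ip1 : H1 -> H1 -> R[i]) (ip2 : H2 -> H2 -> R[i])
          (f1 : I -> H1) (f2 : I -> H2),
      separable_hilbert ip1 -> separable_hilbert ip2 ->
      is_frame ip1 f1 -> is_frame ip2 f2 ->
      ((forall p : Nstar, frame_measure In ip1 f1 p <= frame_measure In ip2 f2 p)
        <-> seq_leqq In (frame_bseq In ip1 f1) (frame_bseq In ip2 f2)))
  (* (3) *)
  /\ (forall (H : lmodType R[i]) (ip : H -> H -> R[i]) (f : I -> H),
      separable_hilbert ip -> is_frame ip f ->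
      is_riesz_basis_of_span ip f ->
      frame_measure In ip f = (fun _ => 1))
  (* (4) *)
  /\ (forall (H1 H2 : lmodType R[i]) (ip1 : H1 -> H1 -> R[i]) (ip2 : H2 -> H2 -> R[i])
          (f1 : I -> H1) (f2 : I -> H2),
      separable_hilbert ip1 -> separable_hilbert ip2 ->
      is_frame ip1 f1 -> is_frame ip2 f2 ->
      ortho_supersets ip1 ip2 f1 f2 ->
      frame_measure In (ip_dsum ip1 ip2) (fun i => (f1 i, f2 i))
        = frame_measure In ip1 f1 \+ frame_measure In ip2 f2).
Proof.
split.
  move=> H1 H2 ip1 ip2 f1 f2 [h1 _ _] [h2 _ _] _ _; exact: part1.
split.
  move=> H1 H2 ip1 ip2 f1 f2 [h1 _ _] [h2 _ _] _ _; exact: part2.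
split.
  by move=> H ip f; apply: part3.
by move=> H1 H2 ip1 ip2 f1 f2; apply: part4.
Qed.
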